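(* Assume $p\ge11$ and $2\le a\le p-5$. For an integer $k\equiv k_\varepsilon\pmod{p-1}$ and $1\le l\le\frac12d_k^{\mathrm{new}}$ put $\sigma_{k,l}=\Delta_{k,l}-\Delta_{k,l-1}$ (so $\sigma_{k,1}\le\sigma_{k,2}\le\dots$), and let $\mu'_k$ be the uniform probability measure on the multiset $Z'_k$ of size $d_k^{\mathrm{new}}$ in which each value $\frac{2}{p-1}\cdot\frac{p+1}{k}\sigma_{k,l}$, $1\le l\le\frac12d_k^{\mathrm{new}}$, is counted twice. Then $\mu'_k$ converges weakly to the uniform probability measure on $[0,1]$ as $k\to\infty$ through $k\equiv k_\varepsilon\pmod{p-1}$.
   Context: $p$ prime, $v_p(p)=1$. For $m\in\mathbb Z$, $\{m\}\in\{0,\dots,p-2\}$ is the residue of $m$ mod $p-1$. Fix $s_\varepsilon\in\{0,\dots,p-2\}$. $k_\varepsilon=2+\{a+2s_\varepsilon\}$, $\delta_\varepsilon=\lfloor(s_\varepsilon+\{a+s_\varepsilon\})/(p-1)\rfloor$; if $a+s_\varepsilon<p-1$, $t_1=s_\varepsilon+\delta_\varepsilon$, $t_2=a+s_\varepsilon+\delta_\varepsilon+2$; else $t_1=\{a+s_\varepsilon\}+\delta_\varepsilon+1$, $t_2=a+s_\varepsilon+\delta_\varepsilon+1$. For $k\ge2$, $k=k_\bullet(p-1)+k_\varepsilon$: $d_k^{\mathrm{Iw}}=2k_\bullet+2-2\delta_\varepsilon$; $d_k^{\mathrm{ur}}=2\lfloor(k_\bullet-t_1)/(p+1)\rfloor+1+\eta_k$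 ($\eta_k=1$ if $k_\bullet-(p+1)\lfloor(k_\bullet-t_1)/(p+1)\rfloor\ge t_2$, else $0$); $d_k^{\mathrm{new}}=d_k^{\mathrm{Iw}}-2d_k^{\mathrm{ur}}$. $w_k=\exp(p(k-2))-1$. For $n\ge1$, $m_n(k)=\min\{n-d_k^{\mathrm{ur}},d_k^{\mathrm{Iw}}-d_k^{\mathrm{ur}}-n\}$ if $d_k^{\mathrm{ur}}<n<d_k^{\mathrm{Iw}}-d_k^{\mathrm{ur}}$ and $0$ otherwise; $g_n(w)=\prod_{k\ge2,\,k\equiv k_\varepsilon}(w-w_k)^{m_n(k)}$. Derivative polygon: $g_{n,\hat k}(w)=g_n(w)/(w-w_k)^{m_n(k)}$; $\Delta'_{k,l}=v_p(g_{\frac12d_k^{\mathrm{Iw}}+l,\hat k}(w_k))-\frac{k-2}{2}l$ for $|l|\le\frac12d_k^{\mathrm{new}}$; $\Delta_{k,l}$ is the value at $l$ of the lower convex hull $\underline\Delta_k$ of the points $(l,\Delta'_{k,l})$. *)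

(* Defs.v *)
From Stdlib Require Import Reals ZArith List Znumtheory.
From Coquelicot Require Import Coquelicot.
Open Scope Z_scope.

(* p-adic valuation of a nonzero integer (fuel |z| suffices since p >= 2) *)
Fixpoint vp_fuel (fuel : nat) (p z : Z) : nat :=
  match fuel with
  | O => O
  | S f => if z =? 0 then O
           else if z mod p =? 0 then S (vp_fuel f p (z / p)) else O
  end.
Definition vp (p z : Z) : nat := vp_fuel (Z.to_nat (Z.abs z)) p z.

Definition zrange (a b : Z) : list Z :=
  map (fun n => a + Z.of_nat n) (seq 0 (Z.to_nat (b - a + 1))).

Section Defs.
Variables (p a s : Z).

Definition res (m : Z) : Z := m mod (p - 1).
Definition k_eps : Z := 2 + res (a + 2 * s).
Definition delta_eps : Z := (s + res (a + s)) / (p - 1).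
Definition t1 : Z :=
  if a + s <? p - 1 then s + delta_eps else res (a + s) + delta_eps + 1.
Definition t2 : Z :=
  if a + s <? p - 1 then a + s + delta_eps + 2 else a + s + delta_eps + 1.

(* weights are indexed by kb = k_bullet; k = kb (p-1) + k_eps;
   k >= 2 corresponds exactly to kb >= 0 *)
Definition kof (kb : Z) : Z := kb * (p - 1) + k_eps.
Definition dIw (kb : Z) : Z := 2 * kb + 2 - 2 * delta_eps.
Definition dur (kb : Z) : Z :=
  let q := (kb - t1) / (p + 1) in
  2 * q + 1 + (if t2 <=? kb - (p + 1) * q then 1 else 0).
Definition dnew (kb : Z) : Z := dIw kb - 2 * dur kb.

Definition mult (n kb : Z) : Z :=
  if andb (dur kb <? n) (n <? dIw kb - dur kb)
  then Z.min (n - dur kb) (dIw kb - dur kb - n) else 0.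

(* m_n(k') = 0 as soon as kb' >= bound n *)
Definition bound (n : Z) : Z := (p + 1) * (Z.abs n + 3) + p.

(* v_p(w_k - w_k') = v_p(p (k - k')) = 1 + v_p(k - k')  (p odd) *)
Definition vw (kb kb' : Z) : Z := 1 + Z.of_nat (vp p (kof kb - kof kb')).

(* v_p (g_{n, hat k}(w_k)) *)
Definition vg (n kb : Z) : Z :=
  fold_right Z.add 0
    (map (fun kb' => if kb' =? kb then 0 else mult n kb' * vw kb kb')
         (zrange 0 (bound n - 1))).

Open Scope R_scope.

Definition Dprime (kb l : Z) : R :=
  IZR (vg (dIw kb / 2 + l) kb) - (IZR (kof kb) - 2) / 2 * IZR l.

(* value at l of the lower convex hull of the points (i, Delta'_{k,i}),
   |i| <= d^new/2 : minimum over chords through l *)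
Definition Delta (kb l : Z) : R :=
  let D := (dnew kb / 2)%Z in
  fold_right Rmin (Dprime kb l)
    (flat_map (fun i => map (fun j =>
        if (i =? j)%Z then Dprime kb i
        else (IZR (j - l) * Dprime kb i + IZR (l - i) * Dprime kb j) / IZR (j - i))
      (zrange l D)) (zrange (- D) l)).

Definition sigma (kb l : Z) : R := Delta kb l - Delta kb (l - 1).

Definition zpt (kb l : Z) : R :=
  2 / (IZR p - 1) * ((IZR p + 1) / IZR (kof kb)) * sigma kb l.

(* integral of f against mu'_k: uniform probability on the multiset Z'_k of
   size d^new_k, each zpt kb l (1 <= l <= d^new/2) counted twice *)
Definition mu_int (f : R -> R) (kb : Z) : R :=
  / IZR (dnew kb) *
  fold_right Rplus 0 (map (fun l => 2 * f (zpt kb l)) (zrange 1 (dnew kb / 2)%Z)).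

End Defs.

(* Main.v *)
Require Import Defs.
From Stdlib Require Import Reals ZArith List Znumtheory.
From Coquelicot Require Import Coquelicot.
From Stdlib Require Import Lia Lra Psatz Bool.

Open Scope Z_scope.

Fixpoint sumZ (f : Z -> Z) (N : nat) : Z :=
  match N with O => 0 | S N' => sumZ f N' + f (Z.of_nat N') end.

Lemma fold_add_init (l : list Z) (x : Z) :
  fold_right Z.add x l = x + fold_right Z.add 0 l.
Proof. induction l; simpl; lia. Qed.

Lemma fold_seq_sumZ (f : Z -> Z) (N : nat) :
  fold_right Z.add 0 (map (fun n => f (Z.of_nat n)) (seq 0 N)) = sumZ f N.
Proof.
  induction N; [reflexivity|].
  rewrite seq_S, map_app, fold_right_app. simpl.
  rewrite (fold_add_init _ (f (Z.of_nat N) + 0)), IHN. lia.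
Qed.

Lemma fold_zrange0 (f : Z -> Z) (B : Z) : 0 <= B ->
  fold_right Z.add 0 (map f (zrange 0 (B - 1))) = sumZ f (Z.to_nat B).
Proof.
  intros HB. unfold zrange. replace (B - 1 - 0 + 1) with B by lia.
  rewrite map_map. rewrite <- fold_seq_sumZ. reflexivity.
Qed.

Lemma sumZ_ext (f g : Z -> Z) N :
  (forall x, 0 <= x < Z.of_nat N -> f x = g x) -> sumZ f N = sumZ g N.
Proof.
  induction N; intros H; simpl; auto.
  rewrite IHN, H; try lia. intros; apply H; lia.
Qed.

Lemma sumZ_ext_le (f g : Z -> Z) N :
  (forall x, 0 <= x < Z.of_nat N -> f x <= g x) -> sumZ f N <= sumZ g N.
Proof.
  induction N; intros H; simpl; auto. lia.
  specialize (IHN (fun x Hx => H x ltac:(lia))). specialize (H (Z.of_nat N) ltac:(lia)). lia.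
Qed.

Lemma sumZ_add (f g : Z -> Z) N : sumZ (fun x => f x + g x) N = sumZ f N + sumZ g N.
Proof. induction N; simpl; lia. Qed.

Lemma sumZ_sub (f g : Z -> Z) N : sumZ (fun x => f x - g x) N = sumZ f N - sumZ g N.
Proof. induction N; simpl; lia. Qed.

Lemma sumZ_scal (c : Z) (f : Z -> Z) N : sumZ (fun x => c * f x) N = c * sumZ f N.
Proof. induction N; simpl; lia. Qed.

Lemma sumZ_zero_ext (f : Z -> Z) N M : (N <= M)%nat ->
  (forall x, Z.of_nat N <= x < Z.of_nat M -> f x = 0) -> sumZ f M = sumZ f N.
Proof.
  intros HNM; induction HNM; intros H; auto.
  simpl. rewrite IHHNM. rewrite H; lia. intros; apply H; lia.
Qed.

Lemma sumZ_swap (f : Z -> Z -> Z) N M :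
  sumZ (fun x => sumZ (fun i => f i x) M) N = sumZ (fun i => sumZ (fun x => f i x) N) M.
Proof.
  induction N; simpl.
  - induction M; simpl; lia.
  - rewrite IHN. rewrite <- sumZ_add. reflexivity.
Qed.

Lemma in_zrange (x a b : Z) : In x (zrange a b) <-> a <= x <= b.
Proof.
  unfold zrange. rewrite in_map_iff. split.
  - intros [n [<- Hn]]. apply in_seq in Hn. lia.
  - intros H. exists (Z.to_nat (x - a)). split. lia. apply in_seq. lia.
Qed.

Open Scope R_scope.
Lemma fold_Rmin_le_init (x0 : R) (l : list R) : fold_right Rmin x0 l <= x0.
Proof. induction l; simpl. lra. eapply Rle_trans; [apply Rmin_r|auto]. Qed.

Lemma fold_Rmin_le_in (x0 : R) (l : list R) x : In x l -> fold_right Rmin x0 l <= x.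
Proof.
  induction l; simpl; [tauto|]. intros [<-|H]. apply Rmin_l.
  eapply Rle_trans; [apply Rmin_r|auto].
Qed.

Lemma fold_Rmin_ge (x0 : R) (l : list R) m :
  m <= x0 -> (forall x, In x l -> m <= x) -> m <= fold_right Rmin x0 l.
Proof.
  induction l; simpl; intros H1 H2; auto.
  apply Rmin_glb; auto.
Qed.

Lemma fold_Rmax_ge_in (x0 : R) (l : list R) x : In x l -> x <= fold_right Rmax x0 l.
Proof.
  induction l; simpl; [tauto|]. intros [<-|H]. apply Rmax_l.
  eapply Rle_trans; [auto|apply Rmax_r].
Qed.

Lemma fold_Rmax_ge_init (x0 : R) (l : list R) : x0 <= fold_right Rmax x0 l.
Proof. induction l; simpl. lra. eapply Rle_trans; [eauto|apply Rmax_r]. Qed.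

Lemma fold_Rmax_le (x0 : R) (l : list R) m :
  x0 <= m -> (forall x, In x l -> x <= m) -> fold_right Rmax x0 l <= m.
Proof.
  induction l; simpl; intros H1 H2; auto.
  apply Rmax_lub; auto.
Qed.

Open Scope Z_scope.

Lemma pow_S_Z (p : Z) (i : nat) : p ^ Z.of_nat (S i) = p * p ^ Z.of_nat i.
Proof. rewrite Nat2Z.inj_succ, Z.pow_succ_r by lia. ring. Qed.

Lemma vp_fuel_spec (fuel : nat) (p z : Z) : prime p -> z <> 0 ->
  Z.abs z < 2 ^ Z.of_nat fuel ->
  forall i : nat, (p ^ Z.of_nat i | z) <-> (i <= vp_fuel fuel p z)%nat.
Proof.
  intros Hp. assert (Hp1 : 1 < p) by (destruct Hp; auto).
  revert z. induction fuel; intros z Hz Hlt i.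
  - simpl in Hlt. lia.
  - simpl. destruct (Z.eqb_spec z 0); [lia|].
    destruct (Z.eqb_spec (z mod p) 0) as [Hm|Hm].
    + assert (Hz' : z = p * (z / p)) by (apply Z.div_exact; lia).
      assert (z / p <> 0) by (intro E; rewrite E in Hz'; lia).
      assert (Z.abs (z / p) < 2 ^ Z.of_nat fuel).
      { rewrite Nat2Z.inj_succ, Z.pow_succ_r in Hlt by lia.
        rewrite Hz', Z.abs_mul in Hlt. rewrite Z.abs_eq in Hlt by lia. nia. }
      destruct i as [|j].
      * simpl. split; intros; [lia|]. apply Z.divide_1_l.
      * rewrite pow_S_Z. rewrite Hz' at 1.
        rewrite Z.mul_divide_cancel_l by lia. rewrite IHfuel by auto. lia.
    + destruct i as [|j].
      * simpl. split; intros; [lia|]. apply Z.divide_1_l.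
      * split; intros H; [|lia]. exfalso. apply Hm.
        apply Z.mod_divide; [lia|]. rewrite pow_S_Z in H.
        eapply Z.divide_trans; [|exact H]. exists (p ^ Z.of_nat j). ring.
Qed.

Lemma vp_spec (p z : Z) : prime p -> z <> 0 ->
  forall i : nat, (p ^ Z.of_nat i | z) <-> (i <= vp p z)%nat.
Proof.
  intros Hp Hz. unfold vp. apply vp_fuel_spec; auto.
  rewrite Z2Nat.id by lia. apply Z.pow_gt_lin_r; lia.
Qed.

Lemma dvd_pow_mul_pm1 (p z : Z) (i : nat) : prime p ->
  (p ^ Z.of_nat i | z * (p - 1)) <-> (p ^ Z.of_nat i | z).
Proof.
  intros Hp. assert (Hp1 : 1 < p) by (destruct Hp; auto).
  split; [|intros H; apply Z.divide_mul_l; auto].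
  revert z. induction i; intros z H.
  - simpl. apply Z.divide_1_l.
  - rewrite pow_S_Z in *.
    assert (Hpz : (p | z)).
    { assert (Hd : (p | z * (p - 1))) by (eapply Z.divide_trans; [|exact H]; exists (p ^ Z.of_nat i); ring).
      destruct (prime_mult p Hp _ _ Hd) as [|Hd2]; auto.
      exfalso. apply Z.divide_pos_le in Hd2; lia. }
    destruct Hpz as [z' ->].
    replace (z' * p * (p - 1)) with (p * (z' * (p - 1))) in H by ring.
    apply Z.mul_divide_cancel_l in H; [|lia].
    replace (z' * p) with (p * z') by ring.
    apply Z.mul_divide_mono_l. auto.
Qed.

Definition zind (b : bool) : Z := if b then 1 else 0.

Lemma sumZ_le_count (v : Z) (N : nat) : 0 <= v ->
  sumZ (fun i => zind (i <=? v)) N = Z.min (v + 1) (Z.of_nat N).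
Proof.
  intros Hv. induction N; simpl sumZ. lia.
  rewrite IHN. unfold zind. destruct (Z.leb_spec (Z.of_nat N) v); lia.
Qed.

Lemma vp_lt (p z : Z) (N : nat) : prime p -> z <> 0 -> Z.abs z < p ^ Z.of_nat N ->
  (vp p z < N)%nat.
Proof.
  intros Hp Hz Hlt. assert (Hp1 : 1 < p) by (destruct Hp; auto).
  pose proof (proj2 (vp_spec p z Hp Hz (vp p z)) (le_n _)) as Hd.
  apply Z.divide_abs_r in Hd. apply Z.divide_pos_le in Hd; [|lia].
  destruct (Nat.lt_ge_cases (vp p z) N) as [|Hge]; auto.
  exfalso. assert (p ^ Z.of_nat N <= p ^ Z.of_nat (vp p z)) by (apply Z.pow_le_mono_r; lia). lia.
Qed.

Lemma vp_count (p z : Z) (N : nat) : prime p -> z <> 0 -> Z.abs z < p ^ Z.of_nat N ->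
  1 + Z.of_nat (vp p z) = sumZ (fun i => zind ((z mod p ^ i) =? 0)) N.
Proof.
  intros Hp Hz Hlt. assert (Hp1 : 1 < p) by (destruct Hp; auto).
  pose proof (vp_lt p z N Hp Hz Hlt).
  rewrite (sumZ_ext _ (fun i => zind (i <=? Z.of_nat (vp p z)))).
  - rewrite sumZ_le_count by lia. lia.
  - intros x Hx. unfold zind. f_equal.
    replace x with (Z.of_nat (Z.to_nat x)) by lia.
    pose proof (vp_spec p z Hp Hz (Z.to_nat x)) as Hs.
    assert (p ^ Z.of_nat (Z.to_nat x) <> 0) by (apply Z.pow_nonzero; lia).
    destruct (Z.eqb_spec (z mod p ^ Z.of_nat (Z.to_nat x)) 0) as [E|E];
    destruct (Z.leb_spec (Z.of_nat (Z.to_nat x)) (Z.of_nat (vp p z))); auto.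
    + apply Z.mod_divide in E; auto. apply Hs in E. lia.
    + exfalso. apply E. apply Z.mod_divide; auto. apply Hs. lia.
Qed.

Open Scope Z_scope.

Set Default Proof Using "All".
Section S3.
Variables (p a s : Z).
Hypothesis Hp : prime p.
Hypothesis Hp11 : 11 <= p.
Hypothesis Ha : 2 <= a <= p - 5.
Hypothesis Hs : 0 <= s <= p - 2.

Lemma res_bounds m : 0 <= res p m <= p - 2.
Proof. unfold res. pose proof (Z.mod_pos_bound m (p-1)). lia. Qed.

Lemma delta_bounds : 0 <= delta_eps p a s <= 1.
Proof.
  unfold delta_eps. pose proof (res_bounds (a + s)).
  split. apply Z.div_pos; lia.
  apply Z.lt_succ_r. apply Z.div_lt_upper_bound; lia.
Qed.

Lemma t1_bounds : 0 <= t1 p a s <= p.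
Proof.
  pose proof delta_bounds. pose proof (res_bounds (a + s)).
  unfold t1. destruct (Z.ltb_spec (a + s) (p - 1)); lia.
Qed.

Lemma dur_bounds x : 2 * x - 4 * p <= (p + 1) * dur p a s x <= 2 * x + 2 * (p + 1).
Proof.
  pose proof t1_bounds.
  unfold dur. set (q := (x - t1 p a s) / (p + 1)).
  pose proof (Z.div_mod (x - t1 p a s) (p + 1) ltac:(lia)).
  pose proof (Z.mod_pos_bound (x - t1 p a s) (p + 1) ltac:(lia)).
  fold q in H0.
  destruct (Z.leb_spec (t2 p a s) (x - (p + 1) * q)); nia.
Qed.

Lemma mult_eq n x : Defs.mult p a s n x =
  Z.max 0 (Z.min (n - dur p a s x) (dIw p a s x - dur p a s x - n)).
Proof.
  unfold Defs.mult. destruct (Z.ltb_spec (dur p a s x) n);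
  destruct (Z.ltb_spec n (dIw p a s x - dur p a s x - n + n)); simpl; try lia;
  replace (dIw p a s x - dur p a s x - n + n) with (dIw p a s x - dur p a s x) in * by lia.
  all: try (destruct (Z.ltb_spec n (dIw p a s x - dur p a s x)); simpl; lia).
Qed.

Lemma tent_diff u v n :
  Z.max 0 (Z.min (n - u) (v - n)) - Z.max 0 (Z.min (n - 1 - u) (v - (n - 1))) =
  zind ((u + 1 <=? n) && (2 * n <=? u + v)) - zind ((u + v + 2 <=? 2 * n) && (n <=? v)).
Proof.
  unfold zind.
  destruct (Z.leb_spec (u + 1) n); destruct (Z.leb_spec (2 * n) (u + v));
  destruct (Z.leb_spec (u + v + 2) (2 * n)); destruct (Z.leb_spec n v); simpl; lia.
Qed.

Definition indA n x := zind ((dur p a s x + 1 <=? n) && (n <=? x + 1 - delta_eps p a s)).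
Definition indB n x := zind ((x + 2 - delta_eps p a s <=? n) && (n <=? dIw p a s x - dur p a s x)).

Lemma mult_diff n x : Defs.mult p a s n x - Defs.mult p a s (n - 1) x = indA n x - indB n x.
Proof.
  rewrite !mult_eq. 
  replace (dIw p a s x - dur p a s x - (n - 1)) with ((dIw p a s x - dur p a s x) - (n - 1)) by lia.
  replace (dIw p a s x - dur p a s x - n) with ((dIw p a s x - dur p a s x) - n) by lia.
  rewrite tent_diff. unfold indA, indB. unfold dIw, zind.
  repeat match goal with |- context [Z.leb ?x ?y] => destruct (Z.leb_spec x y) end; simpl; lia.
Qed.

Lemma mult_zero_far n x : Defs.bound p n <= x -> Defs.mult p a s n x = 0.
Proof.
  intros H. rewrite mult_eq. pose proof (dur_bounds x). unfold Defs.bound in H.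
  assert (dur p a s x >= n) by nia. lia.
Qed.

Definition vterm n K x := if x =? K then 0 else Defs.mult p a s n x * vw p a s K x.

Lemma vg_sum n K (B : nat) : Defs.bound p n <= Z.of_nat B ->
  vg p a s n K = sumZ (vterm n K) B.
Proof.
  intros HB. unfold vg. rewrite fold_zrange0 by (unfold Defs.bound; lia).
  symmetry. apply sumZ_zero_ext. lia.
  intros x Hx. unfold vterm. destruct (x =? K); auto.
  rewrite mult_zero_far; lia.
Qed.

Definition lev K m x := zind ((x - K) mod m =? 0).

Lemma vw_count K x (N : nat) : x <> K -> Z.abs ((K - x) * (p - 1)) < p ^ Z.of_nat N ->
  vw p a s K x = sumZ (fun i => lev K (p ^ i) x) N.
Proof.
  intros Hx Hlt. assert (Hp1 : 1 < p) by (destruct Hp; auto).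
  unfold vw. replace (kof p a s K - kof p a s x) with ((K - x) * (p - 1)) by (unfold kof; ring).
  rewrite (vp_count p _ N Hp) by (auto; nia).
  apply sumZ_ext. intros i Hi. unfold lev, zind.
  replace i with (Z.of_nat (Z.to_nat i)) by lia.
  assert (Hnz : p ^ Z.of_nat (Z.to_nat i) <> 0) by (apply Z.pow_nonzero; lia).
  assert (Hiff : (p ^ Z.of_nat (Z.to_nat i) | (K - x) * (p - 1)) <-> (p ^ Z.of_nat (Z.to_nat i) | x - K)).
  { rewrite dvd_pow_mul_pm1 by auto.
    split; intros H'. replace (x - K) with (-(K - x)) by ring. apply Z.divide_opp_r; auto.
    replace (K - x) with (-(x - K)) by ring. apply Z.divide_opp_r; auto. }
  rewrite <- !(Z.mod_divide _ _ Hnz) in Hiff.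
  destruct (Z.eqb_spec ((K - x) * (p - 1) mod p ^ Z.of_nat (Z.to_nat i)) 0);
  destruct (Z.eqb_spec ((x - K) mod p ^ Z.of_nat (Z.to_nat i)) 0); tauto.
Qed.

Definition cntA n K m B := sumZ (fun x => zind (negb (x =? K)) * indA n x * lev K m x) B.
Definition cntB n K m B := sumZ (fun x => zind (negb (x =? K)) * indB n x * lev K m x) B.

Lemma vg_diff n K (N : nat) : 1 <= n ->
  (forall x, 0 <= x < Defs.bound p n -> x <> K -> Z.abs ((K - x) * (p - 1)) < p ^ Z.of_nat N) ->
  vg p a s n K - vg p a s (n - 1) K =
  sumZ (fun i => cntA n K (p ^ i) (Z.to_nat (Defs.bound p n)) - cntB n K (p ^ i) (Z.to_nat (Defs.bound p n))) N.
Proof.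
  intros Hn HN.
  rewrite (vg_sum n K (Z.to_nat (Defs.bound p n))) by (unfold Defs.bound; lia).
  rewrite (vg_sum (n - 1) K (Z.to_nat (Defs.bound p n))) by (unfold Defs.bound; lia).
  rewrite <- sumZ_sub.
  unfold cntA, cntB.
  rewrite (sumZ_ext _ (fun x => sumZ (fun i => zind (negb (x =? K)) * indA n x * lev K (p ^ i) x -
      zind (negb (x =? K)) * indB n x * lev K (p ^ i) x) N)).
  - rewrite sumZ_swap. apply sumZ_ext. intros i _. apply sumZ_sub.
  - intros x Hx. unfold vterm. destruct (Z.eqb_spec x K).
    + simpl. clear. induction N; simpl; lia.
    + rewrite <- Z.mul_sub_distr_r, mult_diff.
      rewrite (vw_count K x N) by (auto; apply HN; lia).
      rewrite <- sumZ_scal. apply sumZ_ext. intros. change (zind (negb false)) with 1. ring.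
Qed.

End S3.

Open Scope Z_scope.

Lemma floor_step y m : 1 <= m -> (y + 1) / m - y / m = zind ((y + 1) mod m =? 0).
Proof.
  intros Hm. pose proof (Z.div_mod y m ltac:(lia)). pose proof (Z.mod_pos_bound y m ltac:(lia)).
  set (q := y / m) in *. set (t := y mod m) in *.
  unfold zind.
  destruct (Z.eq_dec t (m - 1)) as [E|E].
  - replace (y + 1) with ((q + 1) * m) by lia.
    rewrite Z.div_mul, Z.mod_mul by lia. simpl. lia.
  - replace (y + 1) with ((t + 1) + q * m) by lia.
    rewrite Z.div_add, Z.mod_add by lia.
    rewrite Z.div_small, Z.mod_small by lia.
    destruct (Z.eqb_spec (t + 1) 0); lia.
Qed.

Lemma cnt_interval (K m al be : Z) (B : nat) : 1 <= m -> 0 <= al ->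
  sumZ (fun x => zind ((al <=? x) && (x <=? be)) * lev K m x) B =
  (Z.max (al - 1) (Z.min be (Z.of_nat B - 1)) - K) / m - (al - 1 - K) / m.
Proof.
  intros Hm Hal. induction B.
  - simpl sumZ. assert (E : Z.max (al - 1) (Z.min be (Z.of_nat 0 - 1)) = al - 1) by lia.
    rewrite E. lia.
  - simpl sumZ. rewrite IHB. unfold lev.
    rewrite Nat2Z.inj_succ. destruct (Z.leb_spec al (Z.of_nat B)); destruct (Z.leb_spec (Z.of_nat B) be); cbn [andb]; unfold zind at 1.
    + replace (Z.max (al - 1) (Z.min be (Z.succ (Z.of_nat B) - 1))) with (Z.of_nat B) by lia.
      replace (Z.max (al - 1) (Z.min be (Z.of_nat B - 1))) with (Z.of_nat B - 1) by lia.
      pose proof (floor_step (Z.of_nat B - 1 - K) m Hm).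
      replace (Z.of_nat B - 1 - K + 1) with (Z.of_nat B - K) in H1 by lia. lia.
    + replace (Z.max (al - 1) (Z.min be (Z.succ (Z.of_nat B) - 1))) with
        (Z.max (al - 1) (Z.min be (Z.of_nat B - 1))) by lia. lia.
    + replace (Z.max (al - 1) (Z.min be (Z.succ (Z.of_nat B) - 1))) with
        (Z.max (al - 1) (Z.min be (Z.of_nat B - 1))) by lia. lia.
    + replace (Z.max (al - 1) (Z.min be (Z.succ (Z.of_nat B) - 1))) with
        (Z.max (al - 1) (Z.min be (Z.of_nat B - 1))) by lia. lia.
Qed.

Lemma sum_eqK K (B : nat) : sumZ (fun x => zind (x =? K)) B <= 1.
Proof.
  assert (forall B, sumZ (fun x => zind (x =? K)) B = zind ((0 <=? K) && (K <? Z.of_nat B))).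
  { clear B. induction B; simpl sumZ.
    - unfold zind. destruct (Z.leb_spec 0 K); destruct (Z.ltb_spec K (Z.of_nat 0)); simpl; lia.
    - rewrite IHB. unfold zind.
      destruct (Z.leb_spec 0 K); destruct (Z.ltb_spec K (Z.of_nat B));
      destruct (Z.ltb_spec K (Z.of_nat (S B))); destruct (Z.eqb_spec (Z.of_nat B) K); cbn [andb]; lia. }
  rewrite H. unfold zind. destruct (_ && _); lia.
Qed.

Lemma zind_01 b : 0 <= zind b <= 1.
Proof. destruct b; simpl; lia. Qed.

Lemma lev_01 K m x : 0 <= lev K m x <= 1.
Proof. apply zind_01. Qed.

Lemma sandwich (P : Z -> Z) (K m : Z) (B : nat) al1 al2 be1 be2 :
  1 <= m -> 0 <= al1 <= al2 -> al2 <= be1 + 1 -> be1 <= be2 -> be2 < Z.of_nat B ->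
  (forall x, 0 <= P x <= 1) ->
  (forall x, al2 <= x <= be1 -> P x = 1) ->
  (forall x, P x = 1 -> al1 <= x <= be2) ->
  be1 - al2 + 1 - 2 * m < m * sumZ (fun x => zind (negb (x =? K)) * P x * lev K m x) B
    < be2 - al1 + 1 + m.
Proof.
  intros Hm Hal Hab Hbb HB HP01 HP1 HP2.
  assert (Up : sumZ (fun x => zind (negb (x =? K)) * P x * lev K m x) B <=
               sumZ (fun x => zind ((al1 <=? x) && (x <=? be2)) * lev K m x) B).
  { apply sumZ_ext_le. intros x _. pose proof (lev_01 K m x). pose proof (HP01 x).
    pose proof (zind_01 (negb (x =? K))).
    destruct (Z.eq_dec (P x) 1) as [E|E].
    - specialize (HP2 x E). rewrite E. unfold zind at 2.
      replace ((al1 <=? x) && (x <=? be2)) with true. nia.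
      symmetry. apply andb_true_iff. rewrite !Z.leb_le. lia.
    - assert (P x = 0) as -> by lia. pose proof (zind_01 ((al1 <=? x) && (x <=? be2))). nia. }
  assert (Lo : sumZ (fun x => zind ((al2 <=? x) && (x <=? be1)) * lev K m x - zind (x =? K)) B <=
               sumZ (fun x => zind (negb (x =? K)) * P x * lev K m x) B).
  { apply sumZ_ext_le. intros x _. pose proof (lev_01 K m x). pose proof (HP01 x).
    unfold zind.
    destruct (Z.eqb_spec x K); cbn [negb].
    - destruct ((al2 <=? x) && (x <=? be1)); nia.
    - destruct (Z.leb_spec al2 x); destruct (Z.leb_spec x be1); cbn [andb].
      + rewrite HP1 by lia. lia.
      + nia. + nia. + nia. }
  rewrite sumZ_sub in Lo. pose proof (sum_eqK K B).
  rewrite cnt_interval in Up, Lo by lia.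
  replace (Z.max (al1 - 1) (Z.min be2 (Z.of_nat B - 1))) with be2 in Up by lia.
  replace (Z.max (al2 - 1) (Z.min be1 (Z.of_nat B - 1))) with be1 in Lo by lia.
  pose proof (Z.div_mod (be2 - K) m ltac:(lia)). pose proof (Z.mod_pos_bound (be2 - K) m ltac:(lia)).
  pose proof (Z.div_mod (be1 - K) m ltac:(lia)). pose proof (Z.mod_pos_bound (be1 - K) m ltac:(lia)).
  pose proof (Z.div_mod (al1 - 1 - K) m ltac:(lia)). pose proof (Z.mod_pos_bound (al1 - 1 - K) m ltac:(lia)).
  pose proof (Z.div_mod (al2 - 1 - K) m ltac:(lia)). pose proof (Z.mod_pos_bound (al2 - 1 - K) m ltac:(lia)).
  nia.
Qed.

Open Scope Z_scope.

Set Default Proof Using "All".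
Section S5.
Variables (p a s : Z).
Hypothesis Hp : prime p.
Hypothesis Hp11 : 11 <= p.
Hypothesis Ha : 2 <= a <= p - 5.
Hypothesis Hs : 0 <= s <= p - 2.

Notation δ := (delta_eps p a s).
Definition beA n := ((p + 1) * (n - 5)) / 2.
Definition beA2 n := ((p + 1) * (n + 3)) / 2.
Definition alB n := ((p + 1) * (n + 2)) / (2 * p) + 1.
Definition alB1 n := ((p + 1) * (n - 6)) / (2 * p).
Definition LA n := beA n - n + 2 - δ.
Definition LB n := n - 1 + δ - alB n.

Lemma cntA_bound n K m : 10 <= n -> 1 <= m ->
  LA n - 2 * m < m * cntA p a s n K m (Z.to_nat (Defs.bound p n)) <
  LA n + (beA2 n - beA n) + 2 * m.
Proof.
  intros Hn Hm. pose proof (delta_bounds p a s Hp Hp11 Ha Hs) as Hd.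
  assert (Q1 : 2 * beA n <= (p + 1) * (n - 5) <= 2 * beA n + 1).
  { unfold beA. pose proof (Z.mod_pos_bound ((p + 1) * (n - 5)) 2 ltac:(lia)).
    pose proof (Z.div_mod ((p + 1) * (n - 5)) 2 ltac:(lia)). lia. }
  assert (Q2 : 2 * beA2 n <= (p + 1) * (n + 3) <= 2 * beA2 n + 1).
  { unfold beA2. pose proof (Z.mod_pos_bound ((p + 1) * (n + 3)) 2 ltac:(lia)).
    pose proof (Z.div_mod ((p + 1) * (n + 3)) 2 ltac:(lia)). lia. }
  assert (Q3 : (p + 1) * (n - 5) >= 12 * (n - 5)) by nia.
  assert (Q4 : (p + 1) * (n + 3) = (p + 1) * (n - 5) + 8 * (p + 1)) by ring.
  unfold cntA, LA.
  pose proof (sandwich (indA p a s n) K m (Z.to_nat (Defs.bound p n))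
     (n - 1 + δ) (n - 1 + δ) (beA n) (beA2 n)) as HS.
  assert (HH : beA n - (n - 1 + δ) + 1 - 2 * m <
    m * sumZ (fun x : Z => zind (negb (x =? K)) * indA p a s n x * lev K m x) (Z.to_nat (Defs.bound p n)) <
    beA2 n - (n - 1 + δ) + 1 + m).
  { apply HS.
    - lia.
    - lia.
    - lia.
    - lia.
    - unfold Defs.bound. rewrite Z.abs_eq by lia.
      assert (n + 3 <= (p + 1) * (n + 3)) by (clear - Hn Hp11; nia).
      rewrite Z2Nat.id by lia. lia.
    - intros. apply zind_01.
    - intros x Hx. unfold indA. pose proof (dur_bounds p a s Hp Hp11 Ha Hs x) as Hdu.
      unfold zind. replace ((dur p a s x + 1 <=? n) && (n <=? x + 1 - δ)) with true. auto.
      symmetry. apply andb_true_iff. rewrite !Z.leb_le. split; [|lia].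
      assert ((p + 1) * dur p a s x <= (p + 1) * (n - 1)) by lia.
      apply Z.mul_le_mono_pos_l in H; lia.
    - intros x Hx. unfold indA in Hx. pose proof (dur_bounds p a s Hp Hp11 Ha Hs x) as Hdu.
      unfold zind in Hx. destruct ((dur p a s x + 1 <=? n) && (n <=? x + 1 - δ)) eqn:E; [|lia].
      apply andb_true_iff in E. rewrite !Z.leb_le in E. split; [lia|].
      assert ((p + 1) * dur p a s x <= (p + 1) * (n - 1)) by (apply Z.mul_le_mono_nonneg_l; lia).
      lia. }
  lia.
Qed.

Lemma cntB_bound n K m : 10 <= n -> 1 <= m ->
  LB n - 2 * m < m * cntB p a s n K m (Z.to_nat (Defs.bound p n)) <
  LB n + (alB n - alB1 n) + 2 * m.
Proof.
  intros Hn Hm. pose proof (delta_bounds p a s Hp Hp11 Ha Hs) as Hd.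
  assert (Q1 : 2 * p * (alB n - 1) <= (p + 1) * (n + 2) < 2 * p * (alB n)).
  { unfold alB. pose proof (Z.mod_pos_bound ((p + 1) * (n + 2)) (2 * p) ltac:(lia)).
    pose proof (Z.div_mod ((p + 1) * (n + 2)) (2 * p) ltac:(lia)). lia. }
  assert (Q2 : 2 * p * alB1 n <= (p + 1) * (n - 6) < 2 * p * (alB1 n + 1)).
  { unfold alB1. pose proof (Z.mod_pos_bound ((p + 1) * (n - 6)) (2 * p) ltac:(lia)).
    pose proof (Z.div_mod ((p + 1) * (n - 6)) (2 * p) ltac:(lia)). lia. }
  assert (Q0 : 0 <= alB1 n) by (unfold alB1; apply Z.div_pos; [apply Z.mul_nonneg_nonneg|]; lia).
  assert (Q3 : (p + 1) * (n + 2) <= 2 * p * (n - 2)).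
  { assert (E : 2 * p * (n - 2) - (p + 1) * (n + 2) = (p - 1) * (n - 6) - 8) by ring.
    assert (0 <= (p - 1) * (n - 10)) by (apply Z.mul_nonneg_nonneg; lia). lia. }
  assert (Q4 : (p + 1) * (n + 2) = (p + 1) * (n - 6) + 8 * (p + 1)) by ring.
  assert (Q5 : alB1 n <= alB n).
  { assert (HX : 2 * p * alB1 n < 2 * p * alB n) by lia.
    apply Z.mul_lt_mono_pos_l in HX; lia. }
  assert (Q6 : alB n <= n - 1).
  { assert (HX : 2 * p * (alB n - 1) <= 2 * p * (n - 2)) by lia.
    apply Z.mul_le_mono_pos_l in HX; lia. }
  unfold cntB, LB.
  pose proof (sandwich (indB p a s n) K m (Z.to_nat (Defs.bound p n))
     (alB1 n) (alB n) (n - 2 + δ) (n - 2 + δ)) as HS.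
  assert (HH : n - 2 + δ - alB n + 1 - 2 * m <
    m * sumZ (fun x : Z => zind (negb (x =? K)) * indB p a s n x * lev K m x) (Z.to_nat (Defs.bound p n)) <
    n - 2 + δ - alB1 n + 1 + m).
  { apply HS.
    - lia.
    - lia.
    - lia.
    - lia.
    - unfold Defs.bound. rewrite Z.abs_eq by lia.
      assert (n + 3 <= (p + 1) * (n + 3)) by (clear - Hn Hp11; nia).
      rewrite Z2Nat.id by lia. lia.
    - intros. apply zind_01.
    - intros x Hx. unfold indB. pose proof (dur_bounds p a s Hp Hp11 Ha Hs x) as Hdu.
      unfold zind, dIw. replace ((x + 2 - δ <=? n) && (n <=? 2 * x + 2 - 2 * δ - dur p a s x)) with true. auto.
      symmetry. apply andb_true_iff. rewrite !Z.leb_le. split; [lia|].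
      assert (2 * p * alB n <= 2 * p * x) by (apply Z.mul_le_mono_nonneg_l; lia).
      assert (0 <= (p + 1) * (2 - 2 * δ)) by (apply Z.mul_nonneg_nonneg; lia).
      assert (HY : (p + 1) * n <= (p + 1) * (2 * x + 2 - 2 * δ - dur p a s x)) by lia.
      apply Z.mul_le_mono_pos_l in HY; lia.
    - intros x Hx. unfold indB in Hx. pose proof (dur_bounds p a s Hp Hp11 Ha Hs x) as Hdu.
      unfold zind, dIw in Hx.
      destruct ((x + 2 - δ <=? n) && (n <=? 2 * x + 2 - 2 * δ - dur p a s x)) eqn:E; [|lia].
      apply andb_true_iff in E. rewrite !Z.leb_le in E. split; [|lia].
      assert ((p + 1) * n <= (p + 1) * (2 * x + 2 - 2 * δ - dur p a s x)) by (apply Z.mul_le_mono_nonneg_l; lia).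
      assert (HY : 2 * p * alB1 n < 2 * p * (x + 1)) by lia.
      apply Z.mul_lt_mono_pos_l in HY; lia. }
  lia.
Qed.

Lemma widths n : 10 <= n -> 0 <= beA2 n - beA n <= 4 * p + 5 /\ 0 <= alB n - alB1 n <= 7.
Proof.
  intros Hn. unfold beA, beA2, alB, alB1.
  pose proof (Z.mod_pos_bound ((p + 1) * (n + 2)) (2 * p) ltac:(lia)).
  pose proof (Z.div_mod ((p + 1) * (n + 2)) (2 * p) ltac:(lia)).
  pose proof (Z.mod_pos_bound ((p + 1) * (n - 6)) (2 * p) ltac:(lia)).
  pose proof (Z.div_mod ((p + 1) * (n - 6)) (2 * p) ltac:(lia)).
  pose proof (Z.mod_pos_bound ((p + 1) * (n - 5)) 2 ltac:(lia)).
  pose proof (Z.div_mod ((p + 1) * (n - 5)) 2 ltac:(lia)).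
  pose proof (Z.mod_pos_bound ((p + 1) * (n + 3)) 2 ltac:(lia)).
  pose proof (Z.div_mod ((p + 1) * (n + 3)) 2 ltac:(lia)).
  split; nia.
Qed.

Lemma LAB_approx n : 10 <= n ->
  Z.abs (2 * p * (LA n - LB n) - n * (p - 1) * (p - 1)) <= 2 * p * (3 * p + 10).
Proof.
  intros Hn. pose proof delta_bounds p a s Hp Hp11 Ha Hs as Hd. unfold LA, LB, beA, alB.
  pose proof (Z.mod_pos_bound ((p + 1) * (n + 2)) (2 * p) ltac:(lia)).
  pose proof (Z.div_mod ((p + 1) * (n + 2)) (2 * p) ltac:(lia)).
  pose proof (Z.mod_pos_bound ((p + 1) * (n - 5)) 2 ltac:(lia)).
  pose proof (Z.div_mod ((p + 1) * (n - 5)) 2 ltac:(lia)).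
  nia.
Qed.

Lemma LAB_range n : 10 <= n -> Z.abs (LA n - LB n) <= (p + 1) * n.
Proof.
  intros Hn. pose proof delta_bounds p a s Hp Hp11 Ha Hs as Hd. unfold LA, LB, beA, alB.
  pose proof (Z.mod_pos_bound ((p + 1) * (n + 2)) (2 * p) ltac:(lia)).
  pose proof (Z.div_mod ((p + 1) * (n + 2)) (2 * p) ltac:(lia)).
  pose proof (Z.mod_pos_bound ((p + 1) * (n - 5)) 2 ltac:(lia)).
  pose proof (Z.div_mod ((p + 1) * (n - 5)) 2 ltac:(lia)).
  nia.
Qed.

End S5.

Open Scope R_scope.

Fixpoint sumR (f : Z -> R) (N : nat) : R :=
  match N with O => 0 | S N' => sumR f N' + f (Z.of_nat N') end.

Lemma IZR_sumZ f N : IZR (sumZ f N) = sumR (fun x => IZR (f x)) N.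
Proof. induction N; simpl; auto. rewrite plus_IZR, IHN. auto. Qed.

Lemma sumR_close (f g : Z -> R) N c :
  (forall i, (0 <= i < Z.of_nat N)%Z -> Rabs (f i - g i) <= c) ->
  Rabs (sumR f N - sumR g N) <= INR N * c.
Proof.
  induction N; intros H; cbn [sumR]. rewrite Rminus_0_r, Rabs_R0. simpl. lra.
  rewrite S_INR.
  replace (sumR f N + f (Z.of_nat N) - (sumR g N + g (Z.of_nat N))) with
    ((sumR f N - sumR g N) + (f (Z.of_nat N) - g (Z.of_nat N))) by ring.
  eapply Rle_trans; [apply Rabs_triang|].
  pose proof (IHN (fun i Hi => H i ltac:(lia))). pose proof (H (Z.of_nat N) ltac:(lia)). lra.
Qed.

Lemma sumR_geom (X P : R) N : P > 1 ->
  sumR (fun i => X / (P ^ Z.to_nat i)) N = X * (1 - / P ^ N) * P / (P - 1).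
Proof.
  intros HP. induction N; simpl sumR.
  - simpl. field. lra.
  - rewrite IHN. rewrite Nat2Z.id. simpl pow.
    assert (P ^ N > 0) by (apply pow_lt; lra).
    field. split; lra.
Qed.

Set Default Proof Using "All".
Section S6.
Variables (p a s : Z).
Hypothesis Hp : prime p.
Hypothesis Hp11 : (11 <= p)%Z.
Hypothesis Ha : (2 <= a <= p - 5)%Z.
Hypothesis Hs : (0 <= s <= p - 2)%Z.

Lemma real_main (P X n T r : R) : P >= 11 -> n >= 10 -> T >= 1 -> n * (P - 1) <= 2 * T ->
  2 * P * X - n * (P - 1) * (P - 1) = r -> Rabs r <= 2 * P * (3 * P + 10) ->
  Rabs (X * (1 - / T) * P / (P - 1) - (P - 1) * n / 2) <= 4 * P + 12.
Proof.
  intros HP Hn HT HnT Hr Hrb.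
  assert (E : X * (1 - / T) * P / (P - 1) - (P - 1) * n / 2 =
     r * (1 - / T) / (2 * (P - 1)) - n * (P - 1) / (2 * T)).
  { rewrite <- Hr. field. split; lra. }
  rewrite E. unfold Rminus at 1. eapply Rle_trans; [apply Rabs_triang|]. rewrite Rabs_Ropp.
  assert (0 < / T <= 1) by (split; [apply Rinv_0_lt_compat; lra| rewrite <- Rinv_1; apply Rinv_le_contravar; lra]).
  assert (A1 : Rabs (r * (1 - / T) / (2 * (P - 1))) <= 3 * P + 15).
  { assert (EA : Rabs (r * (1 - / T) / (2 * (P - 1))) = Rabs r * (1 - / T) / (2 * (P - 1))).
    { unfold Rdiv. rewrite !Rabs_mult, Rabs_inv. rewrite (Rabs_right (1 - / T)) by lra.
      rewrite (Rabs_right (2 * (P - 1))) by lra. reflexivity. }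
    rewrite EA. apply (Rmult_le_reg_r (2 * (P - 1))); [lra|].
    unfold Rdiv. rewrite Rmult_assoc, Rinv_l by lra.
    assert (Rabs r * (1 - / T) <= Rabs r) by (pose proof (Rabs_pos r); nra). nra. }
  assert (A2 : Rabs (n * (P - 1) / (2 * T)) <= 1).
  { rewrite Rabs_right. apply (Rmult_le_reg_r (2 * T)); [lra|].
    unfold Rdiv. rewrite Rmult_assoc, Rinv_l by lra. lra.
    apply Rle_ge. unfold Rdiv. apply Rmult_le_pos. nra. left. apply Rinv_0_lt_compat. lra. }
  lra.
Qed.

Lemma diff_est n K (N : nat) : (10 <= n)%Z ->
  (forall x, (0 <= x < Defs.bound p n)%Z -> x <> K -> (Z.abs ((K - x) * (p - 1)) < p ^ Z.of_nat N)%Z) ->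
  (n * (p - 1) <= 2 * p ^ Z.of_nat N)%Z ->
  Rabs (IZR (vg p a s n K - vg p a s (n - 1) K) - (IZR p - 1) * IZR n / 2) <= (INR N + 1) * (10 * IZR p).
Proof.
  intros Hn HN HT.
  assert (Hp1 : (1 < p)%Z) by lia.
  rewrite (vg_diff p a s Hp Hp11 Ha Hs n K N) by (auto; lia).
  rewrite IZR_sumZ.
  set (X := IZR (LA p a s n - LB p a s n)).
  assert (Hmain : Rabs (sumR (fun x => IZR (cntA p a s n K (p ^ x) (Z.to_nat (Defs.bound p n)) -
      cntB p a s n K (p ^ x) (Z.to_nat (Defs.bound p n)))) N - sumR (fun i => X / (IZR p ^ Z.to_nat i)) N)
      <= INR N * (4 * IZR p + 16)).
  { apply sumR_close. intros i Hi.
    set (m := (p ^ i)%Z).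
    assert (Hm : (1 <= m)%Z) by (unfold m; pose proof (Z.pow_pos_nonneg p i ltac:(lia) ltac:(lia)); lia).
    pose proof (cntA_bound p a s Hp Hp11 Ha Hs n K m Hn Hm) as HA.
    pose proof (cntB_bound p a s Hp Hp11 Ha Hs n K m Hn Hm) as HB.
    pose proof (widths p a s Hp Hp11 Ha Hs n Hn) as [W1 W2].
    set (cA := cntA p a s n K m (Z.to_nat (Defs.bound p n))) in *.
    set (cB := cntB p a s n K m (Z.to_nat (Defs.bound p n))) in *.
    assert (Hz : (Z.abs (m * (cA - cB) - (LA p a s n - LB p a s n)) <= 4 * p + 12 + 4 * m)%Z) by lia.
    assert (Em : IZR p ^ Z.to_nat i = IZR m).
    { unfold m. rewrite pow_IZR. f_equal. f_equal. lia. }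
    rewrite Em. apply IZR_le in Hz. rewrite abs_IZR in Hz.
    rewrite !minus_IZR, mult_IZR, !plus_IZR, mult_IZR in Hz.
    assert (HmR : 1 <= IZR m) by (apply IZR_le; lia).
    assert (E : IZR (cA - cB) - X / IZR m = (IZR m * (IZR cA - IZR cB) - X) / IZR m).
    { rewrite minus_IZR. field. lra. }
    rewrite E. unfold Rdiv. rewrite Rabs_mult, Rabs_inv, (Rabs_right (IZR m)) by lra.
    apply (Rmult_le_reg_r (IZR m)); [lra|]. rewrite Rmult_assoc, Rinv_l by lra.
    unfold X. rewrite minus_IZR.
    assert (IZR p >= 11) by (apply Rle_ge; apply IZR_le; lia). rewrite minus_IZR, mult_IZR in Hz. rewrite Rmult_1_r. nra. }
  rewrite sumR_geom in Hmain by (apply Rlt_gt; apply IZR_lt; lia).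
  assert (Hreal : Rabs (X * (1 - / IZR p ^ N) * IZR p / (IZR p - 1) - (IZR p - 1) * IZR n / 2) <= 4 * IZR p + 12).
  { apply (real_main _ _ _ _ (IZR (2 * p * (LA p a s n - LB p a s n) - n * (p - 1) * (p - 1)))).
    - apply Rle_ge; apply IZR_le; lia.
    - apply Rle_ge; apply IZR_le; lia.
    - rewrite pow_IZR. apply Rle_ge. apply IZR_le. pose proof (Z.pow_pos_nonneg p (Z.of_nat N) ltac:(lia) ltac:(lia)); lia.
    - rewrite pow_IZR. rewrite <- !minus_IZR, <- !mult_IZR. apply IZR_le. lia.
    - unfold X. rewrite !minus_IZR, !mult_IZR, !minus_IZR. ring.
    - rewrite <- abs_IZR.
      replace (2 * IZR p * (3 * IZR p + 10)) with (IZR (2 * p * (3 * p + 10))) by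
        (rewrite !mult_IZR, plus_IZR, mult_IZR; ring). apply IZR_le.
      apply (LAB_approx p a s Hp Hp11 Ha Hs n Hn). }
  assert (HpR : IZR p >= 11) by (apply Rle_ge; apply IZR_le; lia).
  pose proof (pos_INR N).
  set (Y := X * (1 - / IZR p ^ N) * IZR p / (IZR p - 1)) in *.
  set (Z0 := sumR _ N) in *.
  replace (Z0 - (IZR p - 1) * IZR n / 2) with ((Z0 - Y) + (Y - (IZR p - 1) * IZR n / 2)) by ring.
  eapply Rle_trans; [apply Rabs_triang|]. nra.
Qed.

End S6.

Open Scope R_scope.

Set Default Proof Using "All".
Section S7.
Variables (p a s : Z).
Hypothesis Hp : prime p.
Hypothesis Hp11 : (11 <= p)%Z.
Hypothesis Ha : (2 <= a <= p - 5)%Z.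
Hypothesis Hs : (0 <= s <= p - 2)%Z.

Definition N0 K := (K + 1 - delta_eps p a s)%Z.
Definition DD K := (dnew p a s K / 2)%Z.
Definition c0 := ((IZR p - 1) * (1 - IZR (delta_eps p a s)) - IZR (k_eps p a s) + 2) / 2.
Definition GG (l : Z) := (IZR p - 1) / 4 * (IZR l * (IZR l + 1)) + c0 * IZR l.
Definition Nlev K := Z.to_nat (Z.log2 (p * (K + (p + 1) * (2 * K + 5) + p)) + 1).
Definition Eone K := (INR (Nlev K) + 1) * (10 * IZR p).

Lemma dIw_half K : (dIw p a s K / 2 = N0 K)%Z.
Proof.
  unfold dIw, N0. replace (2 * K + 2 - 2 * delta_eps p a s)%Z with ((K + 1 - delta_eps p a s) * 2)%Z by ring.
  apply Z.div_mul. lia.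
Qed.

Lemma DD_eq K : DD K = (N0 K - dur p a s K)%Z.
Proof.
  unfold DD, dnew, dIw, N0. 
  replace (2 * K + 2 - 2 * delta_eps p a s - 2 * dur p a s K)%Z with
    ((K + 1 - delta_eps p a s - dur p a s K) * 2)%Z by ring.
  apply Z.div_mul. lia.
Qed.

Lemma dnew_eq K : dnew p a s K = (2 * DD K)%Z.
Proof.
  rewrite DD_eq. unfold dnew, dIw, N0. ring.
Qed.

Lemma dur_large K : (10 * p <= K)%Z -> (9 <= dur p a s K)%Z.
Proof.
  intros HK. pose proof (dur_bounds p a s Hp Hp11 Ha Hs K).
  assert (HX : (9 * (p + 1) < (p + 1) * dur p a s K + (p + 1))%Z) by lia.
  assert (HY : ((p + 1) * 8 < (p + 1) * dur p a s K)%Z) by lia.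
  apply Z.mul_lt_mono_pos_l in HY; lia.
Qed.

Lemma pow_big K : (10 * p <= K)%Z ->
  (p * (K + (p + 1) * (2 * K + 5) + p) < p ^ Z.of_nat (Nlev K))%Z.
Proof.
  intros HK. unfold Nlev. set (R := (p * (K + (p + 1) * (2 * K + 5) + p))%Z).
  assert (HR : (0 < R)%Z) by (unfold R; nia).
  rewrite Z2Nat.id by (pose proof (Z.log2_nonneg R); lia).
  apply Z.lt_le_trans with (2 ^ (Z.log2 R + 1))%Z.
  - rewrite Z.add_1_r. apply Z.log2_spec. auto.
  - apply Z.pow_le_mono_l. pose proof (Z.log2_nonneg R). lia.
Qed.

Lemma diff_K K l : (10 * p <= K)%Z -> (- DD K < l <= DD K)%Z ->
  Rabs (Dprime p a s K l - Dprime p a s K (l - 1) - (GG l - GG (l - 1))) <= Eone K.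
Proof.
  intros HK Hl. pose proof (dur_large K HK) as Hdur.
  pose proof (delta_bounds p a s Hp Hp11 Ha Hs) as Hd.
  pose proof (DD_eq K) as HD.
  pose proof (dur_bounds p a s Hp Hp11 Ha Hs K) as Hdb.
  assert (HDnn : (0 <= DD K)%Z) by lia.
  set (n := (N0 K + l)%Z).
  assert (Hn : (10 <= n)%Z) by (unfold n; lia).
  assert (HnK : (n <= 2 * K + 2)%Z) by (unfold n, N0 in *; lia).
  pose proof (pow_big K HK) as Hpow.
  pose proof (diff_est p a s Hp Hp11 Ha Hs n K (Nlev K) Hn) as Hdiff.
  assert (Hbound : (Defs.bound p n <= (p + 1) * (2 * K + 5) + p)%Z).
  { unfold Defs.bound. rewrite Z.abs_eq by lia. nia. }
  specialize (Hdiff ltac:(intros x Hx HxK; rewrite Z.abs_mul, (Z.abs_eq (p - 1)) by lia; nia)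
                    ltac:(nia)).
  unfold Dprime. rewrite !dIw_half.
  replace (N0 K + (l - 1))%Z with (n - 1)%Z by (unfold n; lia). fold n.
  unfold Eone.
  replace (IZR (vg p a s n K) - (IZR (kof p a s K) - 2) / 2 * IZR l -
     (IZR (vg p a s (n - 1) K) - (IZR (kof p a s K) - 2) / 2 * IZR (l - 1)) - (GG l - GG (l - 1)))
   with (IZR (vg p a s n K - vg p a s (n - 1) K) - (IZR p - 1) * IZR n / 2); auto.
  unfold GG, c0, n, N0, kof. rewrite !minus_IZR, !plus_IZR, !minus_IZR, !mult_IZR, !minus_IZR.
  repeat rewrite ?minus_IZR, ?plus_IZR, ?mult_IZR. field.
Qed.

End S7.

Open Scope R_scope.

Definition chord (y : Z -> R) (l i j : Z) : R :=
  if (i =? j)%Z then y i else (IZR (j - l) * y i + IZR (l - i) * y j) / IZR (j - i).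

Definition hull (y : Z -> R) (D l : Z) : R :=
  fold_right Rmin (y l)
    (flat_map (fun i => map (fun j => chord y l i j) (zrange l D)) (zrange (- D) l)).

Lemma Delta_hull p a s kb l : Defs.Delta p a s kb l = hull (Dprime p a s kb) (dnew p a s kb / 2) l.
Proof. reflexivity. Qed.

Lemma hull_le_y y D l : hull y D l <= y l.
Proof. apply fold_Rmin_le_init. Qed.

Lemma hull_le_chord y D l i j : (- D <= i <= l)%Z -> (l <= j <= D)%Z -> (i < j)%Z ->
  hull y D l <= (IZR (j - l) * y i + IZR (l - i) * y j) / IZR (j - i).
Proof.
  intros Hi Hj Hij. unfold hull. apply fold_Rmin_le_in.
  apply in_flat_map. exists i. split. apply in_zrange; lia.
  apply in_map_iff. exists j. split. unfold chord. destruct (Z.eqb_spec i j); [lia|auto].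
  apply in_zrange; lia.
Qed.

Lemma hull_ge y D l (Phi : Z -> R) : (- D <= l <= D)%Z ->
  (forall x, (- D <= x <= D)%Z -> Phi x <= y x) ->
  (forall i j, (- D <= i <= l)%Z -> (l <= j <= D)%Z -> (i < j)%Z ->
     IZR (j - i) * Phi l <= IZR (j - l) * Phi i + IZR (l - i) * Phi j) ->
  Phi l <= hull y D l.
Proof.
  intros Hl Hy Hc. unfold hull. apply fold_Rmin_ge. apply Hy; lia.
  intros x Hx. apply in_flat_map in Hx as [i [Hi Hx]]. apply in_map_iff in Hx as [j [<- Hj]].
  apply in_zrange in Hi. apply in_zrange in Hj. unfold chord.
  destruct (Z.eqb_spec i j).
  - subst. replace l with j by lia. apply Hy; lia.
  - assert (Hij : (i < j)%Z) by lia.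
    assert (0 < IZR (j - i)) by (apply IZR_lt; lia).
    assert (0 <= IZR (j - l)) by (apply IZR_le; lia).
    assert (0 <= IZR (l - i)) by (apply IZR_le; lia).
    pose proof (Hc i j ltac:(lia) ltac:(lia) Hij).
    pose proof (Hy i ltac:(lia)). pose proof (Hy j ltac:(lia)).
    apply (Rmult_le_reg_r (IZR (j - i))); auto.
    unfold Rdiv. rewrite Rmult_assoc, Rinv_l by lra. nra.
Qed.

Lemma hull_convex y D a b c : (- D <= a)%Z -> (a < b)%Z -> (b < c)%Z -> (c <= D)%Z ->
  IZR (c - a) * hull y D b <= IZR (c - b) * hull y D a + IZR (b - a) * hull y D c.
Proof.
  intros Ha Hab Hbc Hc.
  set (m := hull y D b).
  set (cand := fun u => (m - y u) / IZR (b - u)).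
  set (sl := fold_right Rmax (cand a) (map cand (zrange (- D) (b - 1)))).
  set (ell := fun x => m + sl * IZR (x - b)).
  assert (Hell : forall x, (- D <= x <= D)%Z -> ell x <= y x).
  { intros x Hx. unfold ell.
    destruct (Z.lt_trichotomy x b) as [Hxb|[Hxb|Hxb]].
    - assert (cand x <= sl).
      { apply fold_Rmax_ge_in. apply in_map. apply in_zrange. lia. }
      unfold cand in H. assert (0 < IZR (b - x)) by (apply IZR_lt; lia).
      apply (Rmult_le_compat_r (IZR (b - x))) in H; [|lra].
      unfold Rdiv in H. rewrite Rmult_assoc, Rinv_l in H by lra.
      replace (IZR (x - b)) with (- IZR (b - x)) by (rewrite !minus_IZR; ring). nra.
    - subst x. replace (b - b)%Z with 0%Z by lia. unfold m. pose proof (hull_le_y y D b). simpl. lra.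
    - assert (sl <= (y x - m) / IZR (x - b)).
      { assert (Hcand : forall u, (- D <= u < b)%Z -> cand u <= (y x - m) / IZR (x - b)).
        { intros u Hu. unfold cand.
          pose proof (hull_le_chord y D b u x ltac:(lia) ltac:(lia) ltac:(lia)) as Hch. fold m in Hch.
          assert (0 < IZR (b - u)) by (apply IZR_lt; lia).
          assert (0 < IZR (x - b)) by (apply IZR_lt; lia).
          assert (0 < IZR (x - u)) by (apply IZR_lt; lia).
          apply (Rmult_le_compat_r (IZR (x - u))) in Hch; [|lra].
          unfold Rdiv in *. rewrite Rmult_assoc, Rinv_l in Hch by lra.
          assert (E : IZR (x - u) = IZR (x - b) + IZR (b - u)) by (rewrite <- plus_IZR; f_equal; lia).
          apply (Rmult_le_reg_r (IZR (b - u) * IZR (x - b))). nra.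
          replace ((m - y u) * / IZR (b - u) * (IZR (b - u) * IZR (x - b))) with ((m - y u) * IZR (x - b))
            by (field; lra).
          replace ((y x - m) * / IZR (x - b) * (IZR (b - u) * IZR (x - b))) with ((y x - m) * IZR (b - u))
            by (field; lra).
          rewrite Rmult_1_r in Hch. nra. }
        apply fold_Rmax_le. apply Hcand; lia.
        intros z Hz. apply in_map_iff in Hz as [u [<- Hu]]. apply in_zrange in Hu. apply Hcand. lia. }
      assert (0 < IZR (x - b)) by (apply IZR_lt; lia).
      apply (Rmult_le_compat_r (IZR (x - b))) in H; [|lra].
      unfold Rdiv in H. rewrite Rmult_assoc, Rinv_l in H by lra. lra. }
  assert (Hconv : forall l, (- D <= l <= D)%Z -> ell l <= hull y D l).
  { intros l Hl. apply hull_ge; auto. intros i j Hi Hj Hij. unfold ell.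
    rewrite !minus_IZR. right. ring. }
  pose proof (Hconv a ltac:(lia)). pose proof (Hconv c ltac:(lia)).
  assert (0 <= IZR (c - b)) by (apply IZR_le; lia).
  assert (0 <= IZR (b - a)) by (apply IZR_le; lia).
  apply Rle_trans with (IZR (c - b) * ell a + IZR (b - a) * ell c).
  - unfold ell. rewrite !minus_IZR. right. ring.
  - nra.
Qed.

Open Scope R_scope.

Lemma Rabs_le_between x b : Rabs x <= b -> - b <= x <= b.
Proof. intros H. pose proof (Rle_abs x). pose proof (Rle_abs (-x)). rewrite Rabs_Ropp in *. lra. Qed.

Set Default Proof Using "All".
Section S9.
Variables (p a s : Z).
Hypothesis Hp : prime p.
Hypothesis Hp11 : (11 <= p)%Z.
Hypothesis Ha : (2 <= a <= p - 5)%Z.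
Hypothesis Hs : (0 <= s <= p - 2)%Z.

Lemma y_approx K l : (10 * p <= K)%Z -> (- DD p a s K <= l <= DD p a s K)%Z ->
  Rabs (Dprime p a s K l - Dprime p a s K (- DD p a s K) - (GG p a s l - GG p a s (- DD p a s K)))
   <= IZR (l + DD p a s K)%Z * Eone p K.
Proof.
  intros HK Hl. set (D := DD p a s K) in *.
  replace l with (- D + Z.of_nat (Z.to_nat (l + D)))%Z by lia.
  assert (Hn : (Z.to_nat (l + D) <= Z.to_nat (2 * D))%nat) by lia.
  clear Hl. induction (Z.to_nat (l + D)) as [|j IH].
  - simpl. replace (- D + 0)%Z with (- D)%Z by lia.
    replace (- D + 0 + D)%Z with 0%Z by lia. match goal with |- Rabs ?x <= _ => replace x with 0 by ring end. rewrite Rabs_R0. replace (- D + D)%Z with 0%Z by lia. rewrite Rmult_0_l. lra.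
  - specialize (IH ltac:(lia)).
    pose proof (diff_K p a s Hp Hp11 Ha Hs K (- D + Z.of_nat (S j)) HK ltac:(unfold D in *; lia)) as Hd.
    replace (- D + Z.of_nat (S j) - 1)%Z with (- D + Z.of_nat j)%Z in Hd by lia.
    replace (- D + Z.of_nat (S j) + D)%Z with ((- D + Z.of_nat j + D) + 1)%Z by lia.
    rewrite plus_IZR.
    set (A := Dprime p a s K (- D + Z.of_nat (S j))) in *.
    set (B := Dprime p a s K (- D + Z.of_nat j)) in *.
    set (A' := GG p a s (- D + Z.of_nat (S j))) in *.
    set (B' := GG p a s (- D + Z.of_nat j)) in *.
    replace (A - Dprime p a s K (- D) - (A' - GG p a s (- D))) with
      ((B - Dprime p a s K (- D) - (B' - GG p a s (- D))) + (A - B - (A' - B'))) by ring.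
    eapply Rle_trans; [apply Rabs_triang|]. lra.
Qed.

Lemma E1_pos K : 0 <= Eone p K.
Proof.
  unfold Eone. apply Rmult_le_pos. pose proof (pos_INR (Nlev p K)). lra.
  assert (11 <= IZR p) by (apply IZR_le; lia). lra.
Qed.

Definition epsK K := IZR (2 * DD p a s K)%Z * Eone p K.

Lemma H_bounds K l : (10 * p <= K)%Z -> (- DD p a s K <= l <= DD p a s K)%Z ->
  Rabs (Defs.Delta p a s K l - Dprime p a s K (- DD p a s K) - (GG p a s l - GG p a s (- DD p a s K)))
   <= epsK K.
Proof.
  intros HK Hl. rewrite Delta_hull. fold (DD p a s K).
  set (D := DD p a s K) in *.
  set (y0 := Dprime p a s K (- D)).
  assert (Hy : forall x, (- D <= x <= D)%Z ->
     Rabs (Dprime p a s K x - y0 - (GG p a s x - GG p a s (- D))) <= epsK K).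
  { intros x Hx. eapply Rle_trans; [apply y_approx; auto|]. unfold epsK.
    apply Rmult_le_compat_r. apply E1_pos. apply IZR_le. lia. }
  apply Rabs_le. split.
  - set (Phi := fun x => y0 + (GG p a s x - GG p a s (- D)) - epsK K).
    assert (Phi l <= hull (Dprime p a s K) D l).
    { apply hull_ge; auto.
      - intros x Hx. specialize (Hy x Hx). apply Rabs_le_between in Hy. unfold Phi. lra.
      - intros i j Hi Hj Hij. unfold Phi, GG.
        assert (0 <= IZR (j - l)) by (apply IZR_le; lia).
        assert (0 <= IZR (l - i)) by (apply IZR_le; lia).
        assert (0 <= IZR (j - i)) by (apply IZR_le; lia).
        assert (11 <= IZR p) by (apply IZR_le; lia).
        assert (0 <= (IZR p - 1) / 4 * (IZR (j - l) * IZR (l - i) * IZR (j - i))).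
        { apply Rmult_le_pos. lra. apply Rmult_le_pos; [apply Rmult_le_pos|]; lra. }
        rewrite !minus_IZR in *. nra. }
    unfold Phi in H. lra.
  - pose proof (hull_le_y (Dprime p a s K) D l). specialize (Hy l Hl).
    apply Rabs_le_between in Hy. lra.
Qed.

Lemma eps_pos K : (10 * p <= K)%Z -> 0 <= epsK K.
Proof.
  intros HK. unfold epsK. apply Rmult_le_pos; [|apply E1_pos]. apply IZR_le.
  rewrite (DD_eq p a s Hp Hp11 Ha Hs).
  pose proof (dur_bounds p a s Hp Hp11 Ha Hs K). pose proof (delta_bounds p a s Hp Hp11 Ha Hs).
  assert (HX : ((p + 1) * dur p a s K <= (p + 1) * (K - 1))%Z) by nia.
  apply Z.mul_le_mono_pos_l in HX; [|lia].
  unfold N0. lia.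
Qed.

Lemma slope_bound K l h : (10 * p <= K)%Z -> (1 <= h)%Z -> (1 <= l)%Z -> (l + h <= DD p a s K)%Z ->
  Rabs (Defs.sigma p a s K l - (IZR p - 1) * IZR l / 2) <=
     (IZR p - 1) * (IZR h + 1) / 4 + Rabs (c0 p a s) + 2 * epsK K / IZR h.
Proof.
  intros HK Hh Hl Hlh. set (D := DD p a s K) in *.
  set (H := Defs.Delta p a s K).
  set (y0 := Dprime p a s K (- D)).
  assert (HB : forall x, (- D <= x <= D)%Z -> Rabs (H x - y0 - (GG p a s x - GG p a s (- D))) <= epsK K)
    by (intros; apply H_bounds; auto).
  assert (HhR : 1 <= IZR h) by (apply IZR_le; lia).
  assert (Hup : IZR h * (H l - H (l - 1)%Z) <= H (l + h)%Z - H l).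
  { pose proof (hull_convex (Dprime p a s K) D (l - 1) l (l + h) ltac:(lia) ltac:(lia) ltac:(lia) ltac:(lia)) as Hc.
    rewrite <- !Delta_hull in Hc. fold D H in Hc.
    replace (l + h - (l - 1))%Z with (h + 1)%Z in Hc by lia.
    replace (l + h - l)%Z with h in Hc by lia.
    replace (l - (l - 1))%Z with 1%Z in Hc by lia. rewrite plus_IZR in Hc. lra. }
  assert (Hlo : H (l - 1)%Z - H (l - 1 - h)%Z <= IZR h * (H l - H (l - 1)%Z)).
  { pose proof (hull_convex (Dprime p a s K) D (l - 1 - h) (l - 1) l ltac:(lia) ltac:(lia) ltac:(lia) ltac:(lia)) as Hc.
    rewrite <- !Delta_hull in Hc. fold D H in Hc.
    replace (l - (l - 1 - h))%Z with (h + 1)%Z in Hc by lia.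
    replace (l - (l - 1))%Z with 1%Z in Hc by lia.
    replace (l - 1 - (l - 1 - h))%Z with h in Hc by lia. rewrite plus_IZR in Hc. lra. }
  pose proof (HB l ltac:(lia)) as B1. pose proof (HB (l - 1)%Z ltac:(lia)) as B2.
  pose proof (HB (l + h)%Z ltac:(lia)) as B3. pose proof (HB (l - 1 - h)%Z ltac:(lia)) as B4.
  apply Rabs_le_between in B1, B2, B3, B4.
  unfold Defs.sigma. fold H.
  assert (EG1 : GG p a s (l + h) - GG p a s l =
     IZR h * ((IZR p - 1) * IZR l / 2 + (IZR p - 1) * (IZR h + 1) / 4 + c0 p a s)).
  { unfold GG. rewrite plus_IZR. field. }
  assert (EG2 : GG p a s (l - 1) - GG p a s (l - 1 - h) =
     IZR h * ((IZR p - 1) * IZR l / 2 - (IZR p - 1) * (IZR h + 1) / 4 + c0 p a s)).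
  { unfold GG. rewrite !minus_IZR. field. }
  set (sg := H l - H (l - 1)%Z) in *.
  assert (U : sg <= (IZR p - 1) * IZR l / 2 + (IZR p - 1) * (IZR h + 1) / 4 + c0 p a s + 2 * epsK K / IZR h).
  { apply (Rmult_le_reg_l (IZR h)); [lra|].
    replace (IZR h * ((IZR p - 1) * IZR l / 2 + (IZR p - 1) * (IZR h + 1) / 4 + c0 p a s + 2 * epsK K / IZR h))
      with (IZR h * ((IZR p - 1) * IZR l / 2 + (IZR p - 1) * (IZR h + 1) / 4 + c0 p a s) + 2 * epsK K)
      by (field; lra). lra. }
  assert (L : (IZR p - 1) * IZR l / 2 - (IZR p - 1) * (IZR h + 1) / 4 + c0 p a s - 2 * epsK K / IZR h <= sg).
  { apply (Rmult_le_reg_l (IZR h)); [lra|].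
    replace (IZR h * ((IZR p - 1) * IZR l / 2 - (IZR p - 1) * (IZR h + 1) / 4 + c0 p a s - 2 * epsK K / IZR h))
      with (IZR h * ((IZR p - 1) * IZR l / 2 - (IZR p - 1) * (IZR h + 1) / 4 + c0 p a s) - 2 * epsK K)
      by (field; lra). lra. }
  pose proof (Rabs_pos (c0 p a s)). pose proof (Rle_abs (c0 p a s)). pose proof (Rle_abs (- c0 p a s)).
  rewrite Rabs_Ropp in *.
  apply Rabs_le. lra.
Qed.

End S9.

Open Scope R_scope.

Set Default Proof Using "All".
Section S10.
Variables (p a s : Z).
Hypothesis Hp : prime p.
Hypothesis Hp11 : (11 <= p)%Z.
Hypothesis Ha : (2 <= a <= p - 5)%Z.
Hypothesis Hs : (0 <= s <= p - 2)%Z.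

Lemma keps_bounds : (2 <= k_eps p a s <= p)%Z.
Proof. unfold k_eps. pose proof (res_bounds p a s Hp Hp11 Ha Hs (a + 2 * s)). lia. Qed.

Lemma DK_facts K : (10 * p <= K)%Z ->
  (K <= 2 * DD p a s K <= 2 * K + 2)%Z /\
  (Z.abs ((p + 1) * DD p a s K - kof p a s K) <= 6 * p + 6)%Z /\
  (K * (p - 1) <= kof p a s K)%Z.
Proof.
  intros HK. rewrite (DD_eq p a s Hp Hp11 Ha Hs).
  pose proof (dur_bounds p a s Hp Hp11 Ha Hs K). pose proof (delta_bounds p a s Hp Hp11 Ha Hs).
  pose proof (keps_bounds). pose proof (dur_large p a s Hp Hp11 Ha Hs K HK). unfold N0, kof.
  assert (HY1 : ((p - 3) * (10 * p) <= (p - 3) * K)%Z) by (apply Z.mul_le_mono_nonneg_l; lia).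
  assert (HY2 : (8 * (10 * p) <= (p - 3) * (10 * p))%Z) by (apply Z.mul_le_mono_nonneg_r; lia).
  assert (HY : ((p - 3) * K >= 4 * (p + 1))%Z) by lia.
  assert (HX : ((p + 1) * (2 * dur p a s K) <= (p + 1) * K)%Z) by lia.
  apply Z.mul_le_mono_pos_l in HX; [|lia].
  split; [lia|]. split; [|lia].
  assert (E : ((p + 1) * (K + 1 - delta_eps p a s - dur p a s K) - (K * (p - 1) + k_eps p a s) =
     2 * K + (p + 1) * (1 - delta_eps p a s) - (p + 1) * dur p a s K - k_eps p a s)%Z) by ring.
  rewrite E.
  assert (0 <= (p + 1) * (1 - delta_eps p a s) <= p + 1)%Z by nia. lia.
Qed.

Lemma zpt_close K l h : (10 * p <= K)%Z -> (1 <= h)%Z -> (1 <= l)%Z -> (l + h <= DD p a s K)%Z ->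
  Rabs (zpt p a s K l - IZR l / IZR (DD p a s K)) <=
   2 * (IZR p + 1) / ((IZR p - 1) * IZR (kof p a s K)) *
     ((IZR p - 1) * (IZR h + 1) / 4 + Rabs (c0 p a s) + 2 * epsK p a s K / IZR h)
   + Rabs ((IZR p + 1) * IZR (DD p a s K) / IZR (kof p a s K) - 1).
Proof.
  intros HK Hh Hl Hlh.
  pose proof (slope_bound p a s Hp Hp11 Ha Hs K l h HK Hh Hl Hlh) as HS.
  destruct (DK_facts K HK) as [H1 [H2 H3]].
  set (D := DD p a s K) in *. set (k := kof p a s K) in *.
  assert (HP : 11 <= IZR p) by (apply IZR_le; lia).
  assert (Hk : 0 < IZR k) by (apply IZR_lt; nia).
  assert (HD : 0 < IZR D) by (apply IZR_lt; lia).
  assert (HlD : 0 <= IZR l <= IZR D) by (split; apply IZR_le; lia).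
  set (sg := Defs.sigma p a s K l) in *.
  set (kap := 2 * (IZR p + 1) / ((IZR p - 1) * IZR k)).
  assert (Hkap : 0 < kap).
  { unfold kap. apply Rdiv_lt_0_compat. lra. apply Rmult_lt_0_compat; lra. }
  assert (E : zpt p a s K l - IZR l / IZR D =
      kap * (sg - (IZR p - 1) * IZR l / 2) + IZR l / IZR D * ((IZR p + 1) * IZR D / IZR k - 1)).
  { unfold zpt, kap. fold sg k. field. repeat split; lra. }
  rewrite E. eapply Rle_trans; [apply Rabs_triang|].
  apply Rplus_le_compat.
  - rewrite Rabs_mult, (Rabs_right kap) by lra. apply Rmult_le_compat_l; lra.
  - rewrite Rabs_mult. rewrite (Rabs_right (IZR l / IZR D)).
    2: { apply Rle_ge. unfold Rdiv. apply Rmult_le_pos; [lra|left; apply Rinv_0_lt_compat; lra]. }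
    assert (IZR l / IZR D <= 1).
    { apply (Rmult_le_reg_r (IZR D)); auto. unfold Rdiv. rewrite Rmult_assoc, Rinv_l; lra. }
    pose proof (Rabs_pos ((IZR p + 1) * IZR D / IZR k - 1)). nra.
Qed.

End S10.

Open Scope R_scope.

Lemma cube_le_pow2 (n : nat) : (10 <= n)%nat ->
  (Z.of_nat n * Z.of_nat n * Z.of_nat n <= 2 ^ Z.of_nat n)%Z.
Proof.
  induction 1.
  - simpl. lia.
  - rewrite Nat2Z.inj_succ, Z.pow_succ_r by lia.
    set (x := Z.of_nat m) in *.
    assert (10 <= x)%Z by (unfold x; lia).
    assert (Z.succ x * Z.succ x * Z.succ x <= 2 * (x * x * x))%Z by nia.
    lia.
Qed.

Lemma cube_le_pow2_Z (m : Z) : (10 <= m)%Z -> (m * m * m <= 2 ^ m)%Z.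
Proof.
  intros H. replace m with (Z.of_nat (Z.to_nat m)) by lia.
  apply cube_le_pow2. lia.
Qed.

Set Default Proof Using "All".
Section S11.
Variables (p a s : Z).
Hypothesis Hp : prime p.
Hypothesis Hp11 : (11 <= p)%Z.
Hypothesis Ha : (2 <= a <= p - 5)%Z.
Hypothesis Hs : (0 <= s <= p - 2)%Z.

Definition Kmin := Z.max (10 * p) (2 ^ 10).
Definition mK (K : Z) := Z.log2 K.
Definition hK (K : Z) := (mK K * mK K)%Z.
Definition cp := (Z.log2 (4 * p * p) + 2)%Z.

Lemma mK_facts K : (Kmin <= K)%Z -> (10 <= mK K)%Z /\ (hK K * mK K <= K)%Z.
Proof.
  intros HK. unfold Kmin in HK. unfold hK, mK.
  assert (H10 : (10 <= Z.log2 K)%Z).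
  { replace 10%Z with (Z.log2 (2 ^ 10)) by reflexivity. apply Z.log2_le_mono. lia. }
  split; auto.
  pose proof (cube_le_pow2_Z _ H10).
  pose proof (Z.log2_spec K ltac:(lia)). lia.
Qed.

Lemma Nlev_bound K : (Kmin <= K)%Z -> (Z.of_nat (Nlev p K) <= mK K + cp)%Z.
Proof.
  intros HK. unfold Kmin in HK. unfold Nlev, mK, cp.
  set (R := (p * (K + (p + 1) * (2 * K + 5) + p))%Z).
  assert (HR : (0 < R)%Z) by (unfold R; nia).
  assert (HR2 : (R <= 4 * p * p * K)%Z) by (unfold R; nia).
  pose proof (Z.log2_nonneg R).
  rewrite Z2Nat.id by lia.
  assert (Z.log2 R <= Z.log2 (4 * p * p * K))%Z by (apply Z.log2_le_mono; lia).
  assert (Z.log2 (4 * p * p * K) <= Z.log2 (4 * p * p) + Z.log2 K + 1)%Z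
    by (apply Z.log2_mul_above; nia).
  lia.
Qed.

Definition Cst := (IZR p - 1) / 2 + Rabs (c0 p a s) + 8 + 80 * IZR p * (IZR cp + 2).

Lemma asym K : (Kmin <= K)%Z ->
  (2 * hK K <= DD p a s K)%Z /\ (1 <= hK K)%Z /\
  IZR (hK K) / IZR (DD p a s K) <= 2 / IZR (mK K) /\
  1 / IZR (DD p a s K) <= 2 / IZR (mK K) /\
  (forall l, (1 <= l)%Z -> (l + hK K <= DD p a s K)%Z ->
     Rabs (zpt p a s K l - IZR l / IZR (DD p a s K)) <= Cst / IZR (mK K)).
Proof.
  intros HK. destruct (mK_facts K HK) as [Hm Hhm].
  assert (HK10 : (10 * p <= K)%Z) by (unfold Kmin in HK; lia).
  destruct (DK_facts p a s Hp Hp11 Ha Hs K HK10) as [HD1 [HD2 HD3]].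
  pose proof (Nlev_bound K HK) as HN.
  assert (Hcp : (2 <= cp)%Z) by (unfold cp; pose proof (Z.log2_nonneg (4 * p * p)); lia).
  set (m := mK K) in *. set (h := hK K) in *. set (D := DD p a s K) in *.
  assert (Hh1 : (100 <= h)%Z) by (unfold h, hK; fold m; nia).
  assert (HhD : (2 * h <= D)%Z) by nia.
  assert (HmR : 10 <= IZR m) by (apply IZR_le; lia).
  assert (HDR : 0 < IZR D) by (apply IZR_lt; lia).
  assert (HKR : IZR h * IZR m <= IZR K) by (rewrite <- mult_IZR; apply IZR_le; lia).
  assert (HKD : IZR K <= 2 * IZR D).
  { assert (HX : (K <= 2 * D)%Z) by lia. apply IZR_le in HX. rewrite mult_IZR in HX. lra. }
  assert (HhR : 100 <= IZR h) by (apply IZR_le; lia).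
  split; [lia|]. split; [lia|].
  split.
  { apply (Rmult_le_reg_r (IZR D * IZR m)). nra.
    replace (IZR h / IZR D * (IZR D * IZR m)) with (IZR h * IZR m) by (field; lra).
    replace (2 / IZR m * (IZR D * IZR m)) with (2 * IZR D) by (field; lra). lra. }
  split.
  { apply (Rmult_le_reg_r (IZR D * IZR m)). nra.
    replace (1 / IZR D * (IZR D * IZR m)) with (IZR m) by (field; lra).
    replace (2 / IZR m * (IZR D * IZR m)) with (2 * IZR D) by (field; lra). nra. }
  intros l Hl Hlh.
  eapply Rle_trans; [apply (zpt_close p a s Hp Hp11 Ha Hs K l h HK10); lia|].
  set (k := kof p a s K) in *.
  assert (HP : 11 <= IZR p) by (apply IZR_le; lia).
  assert (HkR : IZR K * (IZR p - 1) <= IZR k).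
  { apply IZR_le in HD3. rewrite mult_IZR, minus_IZR in HD3. lra. }
  assert (HKpos : IZR m * IZR m * IZR m <= IZR K).
  { rewrite <- !mult_IZR. apply IZR_le. unfold h, hK in Hhm. fold m in Hhm. lia. }
  assert (HmK0 : IZR m <= IZR K) by nra.
  assert (HK0 : 1000 <= IZR K) by (apply IZR_le; unfold Kmin in HK; lia).
  assert (Hkpos : 0 < IZR k).
  { assert (0 < IZR K * (IZR p - 1)) by (apply Rmult_lt_0_compat; lra). lra. }
  assert (HNR : INR (Nlev p K) <= IZR m + IZR cp).
  { rewrite INR_IZR_INZ. rewrite <- plus_IZR. apply IZR_le. lia. }
  pose proof (pos_INR (Nlev p K)).
  assert (HcpR : 2 <= IZR cp) by (apply IZR_le; lia).
  set (kap := 2 * (IZR p + 1) / ((IZR p - 1) * IZR k)).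
  assert (Hkap : kap * IZR K <= 1).
  { unfold kap. apply (Rmult_le_reg_r ((IZR p - 1) * IZR k)). nra.
    replace (2 * (IZR p + 1) / ((IZR p - 1) * IZR k) * IZR K * ((IZR p - 1) * IZR k))
      with (2 * (IZR p + 1) * IZR K) by (field; nra).
    assert ((IZR p - 1) * (IZR K * (IZR p - 1)) <= (IZR p - 1) * IZR k) by nra. nra. }
  assert (Hkap0 : 0 < kap).
  { unfold kap. apply Rdiv_lt_0_compat. lra. nra. }
  assert (T1 : kap * ((IZR p - 1) * (IZR h + 1) / 4) <= (IZR p - 1) / 2 / IZR m).
  { apply Rle_trans with ((IZR p - 1) * (IZR h + 1) / 4 / IZR K).
    - apply (Rmult_le_reg_r (IZR K)). nra.
      replace ((IZR p - 1) * (IZR h + 1) / 4 / IZR K * IZR K) with ((IZR p - 1) * (IZR h + 1) / 4) by (field; nra).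
      assert (0 <= (IZR p - 1) * (IZR h + 1) / 4) by nra. nra.
    - apply (Rmult_le_reg_r (IZR K * IZR m)). nra.
      replace ((IZR p - 1) * (IZR h + 1) / 4 / IZR K * (IZR K * IZR m)) with ((IZR p - 1) * (IZR h + 1) / 4 * IZR m) by (field; nra).
      replace ((IZR p - 1) / 2 / IZR m * (IZR K * IZR m)) with ((IZR p - 1) / 2 * IZR K) by (field; nra).
      assert (HmK : IZR m <= IZR K) by nra.
      assert (HX : (IZR h + 1) * IZR m <= 2 * IZR K) by nra.
      assert (HY : 0 <= (IZR p - 1) / 4) by lra.
      apply Rmult_le_compat_l with (r := (IZR p - 1) / 4) in HX; auto.
      replace ((IZR p - 1) * (IZR h + 1) / 4 * IZR m) with ((IZR p - 1) / 4 * ((IZR h + 1) * IZR m)) by field.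
      lra. }
  assert (T2 : kap * Rabs (c0 p a s) <= Rabs (c0 p a s) / IZR m).
  { pose proof (Rabs_pos (c0 p a s)).
    apply (Rmult_le_reg_r (IZR m)). nra.
    replace (Rabs (c0 p a s) / IZR m * IZR m) with (Rabs (c0 p a s)) by (field; nra).
    assert (HX : kap * IZR m <= 1).
    { apply Rle_trans with (kap * IZR K); [apply Rmult_le_compat_l; lra | lra]. }
    replace (kap * Rabs (c0 p a s) * IZR m) with ((kap * IZR m) * Rabs (c0 p a s)) by ring.
    rewrite <- (Rmult_1_l (Rabs (c0 p a s))) at 2. apply Rmult_le_compat_r; lra. }
  assert (T3 : kap * (2 * epsK p a s K / IZR h) <= 80 * IZR p * (IZR cp + 2) / IZR m).
  { unfold epsK, Eone. fold D.
    assert (HE : IZR (2 * D)%Z <= 2 * IZR K + 2).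
    { replace (2 * IZR K + 2) with (IZR (2 * K + 2)) by (rewrite plus_IZR, mult_IZR; ring). apply IZR_le; lia. }
    assert (HE0 : 0 <= IZR (2 * D)%Z) by (apply IZR_le; lia).
    set (NN := INR (Nlev p K)) in *.
    apply Rle_trans with (2 * (2 * IZR K + 2) * ((IZR m + IZR cp + 1) * (10 * IZR p)) / IZR h / IZR K).
    - apply (Rmult_le_reg_r (IZR K * IZR h)). nra.
      replace (2 * (2 * IZR K + 2) * ((IZR m + IZR cp + 1) * (10 * IZR p)) / IZR h / IZR K * (IZR K * IZR h))
        with (2 * (2 * IZR K + 2) * ((IZR m + IZR cp + 1) * (10 * IZR p))) by (field; nra).
      replace (kap * (2 * (IZR (2 * D) * ((NN + 1) * (10 * IZR p))) / IZR h) * (IZR K * IZR h))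
        with ((kap * IZR K) * (2 * (IZR (2 * D) * ((NN + 1) * (10 * IZR p))))) by (field; nra).
      assert (0 <= 2 * (IZR (2 * D) * ((NN + 1) * (10 * IZR p)))) by (repeat apply Rmult_le_pos; lra).
      assert (2 * (IZR (2 * D) * ((NN + 1) * (10 * IZR p))) <=
              2 * (2 * IZR K + 2) * ((IZR m + IZR cp + 1) * (10 * IZR p))).
      { assert (HX : (NN + 1) * (10 * IZR p) <= (IZR m + IZR cp + 1) * (10 * IZR p)) by (apply Rmult_le_compat_r; lra).
        assert (0 <= (NN + 1) * (10 * IZR p)) by (apply Rmult_le_pos; lra).
        rewrite Rmult_assoc. apply Rmult_le_compat_l; [lra|]. apply Rmult_le_compat; lra. }
      assert (HX : 0 <= kap * IZR K) by (apply Rmult_le_pos; lra).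
      apply Rle_trans with (1 * (2 * (IZR (2 * D) * ((NN + 1) * (10 * IZR p))))).
      apply Rmult_le_compat_r; lra. lra.
    - apply (Rmult_le_reg_r (IZR K * IZR h * IZR m)). apply Rmult_lt_0_compat; [apply Rmult_lt_0_compat|]; lra.
      replace (2 * (2 * IZR K + 2) * ((IZR m + IZR cp + 1) * (10 * IZR p)) / IZR h / IZR K * (IZR K * IZR h * IZR m))
        with (2 * (2 * IZR K + 2) * ((IZR m + IZR cp + 1) * (10 * IZR p)) * IZR m) by (field; nra).
      replace (80 * IZR p * (IZR cp + 2) / IZR m * (IZR K * IZR h * IZR m))
        with (80 * IZR p * (IZR cp + 2) * IZR K * IZR h) by (field; nra).
      assert (Hh : IZR h = IZR m * IZR m) by (unfold h, hK; fold m; apply mult_IZR).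
      rewrite Hh.
      assert (HK4 : 2 * IZR K + 2 <= 4 * IZR K) by lra.
      set (A := IZR m + IZR cp + 1).
      assert (HA0 : 0 <= A) by (unfold A; lra).
      assert (HAm : A * IZR m <= (IZR cp + 2) * (IZR m * IZR m)).
      { assert (E : (IZR cp + 2) * (IZR m * IZR m) - A * IZR m = (IZR cp + 1) * (IZR m * (IZR m - 1))) by (unfold A; ring).
        assert (0 <= (IZR cp + 1) * (IZR m * (IZR m - 1))) by (apply Rmult_le_pos; [lra| apply Rmult_le_pos; lra]).
        lra. }
      assert (HAB : 0 <= A * (10 * IZR p) * IZR m) by (apply Rmult_le_pos; [apply Rmult_le_pos|]; lra).
      assert (S1 : 2 * (2 * IZR K + 2) * (A * (10 * IZR p)) * IZR m <= 2 * (4 * IZR K) * (A * (10 * IZR p)) * IZR m).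
      { replace (2 * (2 * IZR K + 2) * (A * (10 * IZR p)) * IZR m) with (2 * (2 * IZR K + 2) * (A * (10 * IZR p) * IZR m)) by ring.
        replace (2 * (4 * IZR K) * (A * (10 * IZR p)) * IZR m) with (2 * (4 * IZR K) * (A * (10 * IZR p) * IZR m)) by ring.
        apply Rmult_le_compat_r; lra. }
      assert (S2 : 2 * (4 * IZR K) * (A * (10 * IZR p)) * IZR m = (80 * IZR p * IZR K) * (A * IZR m)) by ring.
      assert (S3 : (80 * IZR p * IZR K) * (A * IZR m) <= (80 * IZR p * IZR K) * ((IZR cp + 2) * (IZR m * IZR m))).
      { apply Rmult_le_compat_l; auto. apply Rmult_le_pos; lra. }
      assert (S4 : (80 * IZR p * IZR K) * ((IZR cp + 2) * (IZR m * IZR m)) = 80 * IZR p * (IZR cp + 2) * IZR K * (IZR m * IZR m)) by ring.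
      lra. }
  assert (T4 : Rabs ((IZR p + 1) * IZR D / IZR k - 1) <= 8 / IZR m).
  { replace ((IZR p + 1) * IZR D / IZR k - 1) with (IZR ((p + 1) * D - k) / IZR k)
      by (rewrite minus_IZR, mult_IZR, plus_IZR; field; lra).
    unfold Rdiv. rewrite Rabs_mult, Rabs_inv, (Rabs_right (IZR k)) by lra.
    rewrite <- abs_IZR. apply IZR_le in HD2. rewrite plus_IZR, mult_IZR in HD2.
    apply (Rmult_le_reg_r (IZR k * IZR m)). nra.
    replace (IZR (Z.abs ((p + 1) * D - k)) * / IZR k * (IZR k * IZR m)) with (IZR (Z.abs ((p + 1) * D - k)) * IZR m)
      by (field; lra).
    replace (8 * / IZR m * (IZR k * IZR m)) with (8 * IZR k) by (field; lra).
    assert (IZR m <= IZR K) by nra.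
    assert (IZR (Z.abs ((p + 1) * D - k)) * IZR m <= (6 * IZR p + 6) * IZR m) by nra.
    nra. }
  fold kap.
  apply Rle_trans with ((IZR p - 1) / 2 / IZR m + Rabs (c0 p a s) / IZR m + 80 * IZR p * (IZR cp + 2) / IZR m + 8 / IZR m).
  - fold D. match goal with |- kap * (?x1 + ?x2 + ?x3) + _ <= _ => replace (kap * (x1 + x2 + x3)) with (kap * x1 + kap * x2 + kap * x3) by ring end. lra.
  - unfold Cst. right. field. lra.
Qed.

End S11.

Open Scope R_scope.

Lemma sumR_ext (f g : Z -> R) N :
  (forall x, (0 <= x < Z.of_nat N)%Z -> f x = g x) -> sumR f N = sumR g N.
Proof.
  induction N; intros H; simpl; auto.
  rewrite IHN, H; try lia; auto. intros; apply H; lia.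
Qed.

Lemma sumR_le (f g : Z -> R) N :
  (forall x, (0 <= x < Z.of_nat N)%Z -> f x <= g x) -> sumR f N <= sumR g N.
Proof.
  induction N; intros H; simpl. lra.
  pose proof (IHN (fun x Hx => H x ltac:(lia))). pose proof (H (Z.of_nat N) ltac:(lia)). lra.
Qed.

Lemma sumR_abs (f : Z -> R) N : Rabs (sumR f N) <= sumR (fun x => Rabs (f x)) N.
Proof.
  induction N; simpl. rewrite Rabs_R0. lra.
  eapply Rle_trans; [apply Rabs_triang|]. lra.
Qed.

Lemma sumR_plus (f g : Z -> R) N : sumR (fun x => f x + g x) N = sumR f N + sumR g N.
Proof. induction N; simpl; lra. Qed.

Lemma sumR_minus (f g : Z -> R) N : sumR (fun x => f x - g x) N = sumR f N - sumR g N.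
Proof. induction N; simpl; lra. Qed.

Lemma sumR_scal (c : R) (f : Z -> R) N : sumR (fun x => c * f x) N = c * sumR f N.
Proof. induction N; simpl; lra. Qed.

Lemma sumR_const (c : R) N : sumR (fun _ => c) N = INR N * c.
Proof. induction N; simpl sumR. simpl; lra. rewrite S_INR. lra. Qed.

Lemma sumR_tail (c : R) (T : Z) N :
  sumR (fun j => if (T <=? j)%Z then c else 0) N = IZR (Z.max 0 (Z.of_nat N - Z.max T 0)) * c.
Proof.
  induction N; simpl sumR.
  - replace (Z.max 0 (Z.of_nat 0 - Z.max T 0)) with 0%Z by lia. simpl. lra.
  - rewrite IHN. destruct (Z.leb_spec T (Z.of_nat N)).
    + replace (Z.max 0 (Z.of_nat (S N) - Z.max T 0)) with (Z.max 0 (Z.of_nat N - Z.max T 0) + 1)%Z by lia.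
      rewrite plus_IZR. lra.
    + replace (Z.max 0 (Z.of_nat (S N) - Z.max T 0)) with (Z.max 0 (Z.of_nat N - Z.max T 0)) by lia. lra.
Qed.

Lemma fold_R_zrange (g : Z -> R) (a b : Z) :
  fold_right Rplus 0 (map g (zrange a b)) = sumR (fun j => g (a + j)%Z) (Z.to_nat (b - a + 1)).
Proof.
  unfold zrange. rewrite map_map. generalize (Z.to_nat (b - a + 1)) as n. intros n.
  induction n; [reflexivity|].
  rewrite seq_S, map_app, fold_right_app. simpl.
  assert (Hf : forall l x, fold_right Rplus x l = x + fold_right Rplus 0 l).
  { induction l; simpl; intros; [lra|]. rewrite IHl. lra. }
  rewrite Hf, IHn. lra.
Qed.

Lemma chasles_sum (f : R -> R) (n : nat) : (0 < n)%nat -> (forall x, continuous f x) ->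
  forall k, (k <= n)%nat ->
  RInt f 0 (INR k / INR n) = sumR (fun j => RInt f (IZR j / INR n) ((IZR j + 1) / INR n)) k.
Proof.
  intros Hn Hc. induction k; intros Hk.
  - simpl. replace (0 / INR n) with 0 by (unfold Rdiv; ring). exact (RInt_point 0 f).
  - simpl sumR. rewrite <- IHk by lia.
    rewrite <- INR_IZR_INZ.
    assert (E := RInt_Chasles f 0 (INR k / INR n) ((INR k + 1) / INR n)).
    rewrite S_INR. rewrite <- E.
    + reflexivity.
    + apply ex_RInt_continuous. intros; apply Hc.
    + apply ex_RInt_continuous. intros; apply Hc.
Qed.

Lemma piece_bound (f : R -> R) (a b w : R) : a <= b -> (forall x, continuous f x) ->
  (forall t, a <= t <= b -> Rabs (f t - f b) <= w) ->
  Rabs (RInt f a b - (b - a) * f b) <= (b - a) * w.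
Proof.
  intros Hab Hc Hw.
  assert (Hex : ex_RInt f a b) by (apply (@ex_RInt_continuous R_CompleteNormedModule); intros; apply Hc).
  assert (Hex2 : ex_RInt (fun _ => f b) a b) by apply ex_RInt_const.
  assert (E : RInt (fun x => f x - f b) a b = RInt f a b - (b - a) * f b).
  { assert (H := RInt_minus f (fun _ => f b) a b Hex Hex2). simpl in H.
    unfold minus, plus, opp in H. simpl in H. transitivity (RInt (fun x => f x + - f b) a b); [reflexivity|]. rewrite H.
    rewrite RInt_const. unfold scal. simpl. unfold mult. simpl. ring. }
  rewrite <- E. apply abs_RInt_le_const; auto.
  apply (ex_RInt_minus f (fun _ => f b)); auto.
Qed.

Lemma riemann (f : R -> R) (n : nat) (w : R) : (0 < n)%nat -> (forall x, continuous f x) ->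
  (forall x y, 0 <= x <= 1 -> 0 <= y <= 1 -> Rabs (x - y) <= 1 / INR n -> Rabs (f x - f y) <= w) ->
  Rabs (sumR (fun j => f ((IZR j + 1) / INR n)) n / INR n - RInt f 0 1) <= w.
Proof.
  intros Hn Hc Hw.
  assert (HnR : 0 < INR n) by (apply lt_0_INR; lia).
  replace (RInt f 0 1) with (sumR (fun j => RInt f (IZR j / INR n) ((IZR j + 1) / INR n)) n).
  2: { rewrite <- (chasles_sum f n Hn Hc n (le_n _)). f_equal. field. lra. }
  unfold Rdiv at 1. rewrite Rmult_comm, <- sumR_scal, <- sumR_minus.
  eapply Rle_trans; [apply sumR_abs|].
  apply Rle_trans with (sumR (fun _ => 1 / INR n * w) n).
  - apply sumR_le. intros j Hj.
    assert (Hj' : 0 <= IZR j <= INR n - 1).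
    { split. apply IZR_le; lia. rewrite INR_IZR_INZ. rewrite <- minus_IZR. apply IZR_le. lia. }
    set (a := IZR j / INR n). set (b := (IZR j + 1) / INR n).
    assert (Hab : b - a = 1 / INR n) by (unfold a, b; field; lra).
    assert (Ha0 : 0 <= a) by (unfold a; apply Rmult_le_pos; [lra|left; apply Rinv_0_lt_compat; lra]).
    assert (Hb1 : b <= 1).
    { unfold b. apply (Rmult_le_reg_r (INR n)); auto. unfold Rdiv. rewrite Rmult_assoc, Rinv_l; lra. }
    assert (Hinv : 0 < 1 / INR n) by (unfold Rdiv; rewrite Rmult_1_l; apply Rinv_0_lt_compat; lra).
    pose proof (piece_bound f a b w ltac:(lra) Hc) as HP.
    rewrite Hab in HP.
    replace (/ INR n * f b - RInt f a b) with (- (RInt f a b - 1 / INR n * f b)) by (field; lra).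
    rewrite Rabs_Ropp. apply HP. intros t Ht. apply Hw; try lra.
    rewrite Rabs_left1 by lra. lra.
  - rewrite sumR_const. right. field. lra.
Qed.

Open Scope R_scope.

Lemma mu_int_eq p a s f K : prime p -> (11 <= p)%Z -> (2 <= a <= p - 5)%Z -> (0 <= s <= p - 2)%Z -> (0 < DD p a s K)%Z ->
  mu_int p a s f K = sumR (fun j => f (zpt p a s K (1 + j))) (Z.to_nat (DD p a s K)) / IZR (DD p a s K).
Proof.
  intros Hp Hp11 Ha Hs HD. unfold mu_int. rewrite fold_R_zrange. fold (DD p a s K).
  replace (DD p a s K - 1 + 1)%Z with (DD p a s K) by lia.
  rewrite (dnew_eq p a s Hp Hp11 Ha Hs K). rewrite sumR_scal. rewrite mult_IZR.
  assert (0 < IZR (DD p a s K)) by (apply IZR_lt; lia).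
  field. lra.
Qed.

Theorem main_thm (p a s : Z) :
  prime p -> (11 <= p)%Z -> (2 <= a <= p - 5)%Z -> (0 <= s <= p - 2)%Z ->
  forall f : R -> R,
    (forall x, continuous f x) ->
    (exists M, forall x, Rabs (f x) <= M) ->
    is_lim_seq (fun n : nat => mu_int p a s f (Z.of_nat n)) (RInt f 0 1).
Proof.
  intros Hp Hp11 Ha Hs f Hc [M HM].
  apply is_lim_seq_spec. intros eps.
  assert (HM0 : 0 <= M) by (pose proof (HM 0); pose proof (Rabs_pos (f 0)); lra).
  assert (Hucont : uniform_continuity f (fun c => -1 <= c <= 2)).
  { apply Heine. apply compact_P3. intros x _. apply continuity_pt_filterlim. apply Hc. }
  destruct (Hucont (mkposreal (eps / 4) ltac:(pose proof (cond_pos eps); lra))) as [dl Hdl].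
  simpl in Hdl.
  pose proof (cond_pos eps) as He. pose proof (cond_pos dl) as Hd.
  set (C := Cst p a s).
  assert (HC : 0 <= C).
  { unfold C, Cst, cp. pose proof (Rabs_pos (c0 p a s)).
    assert (0 <= IZR (Z.log2 (4 * p * p) + 2)) by (apply IZR_le; pose proof (Z.log2_nonneg (4 * p * p)); lia).
    assert (11 <= IZR p) by (apply IZR_le; lia).
    assert (0 <= 80 * IZR p * (IZR (Z.log2 (4 * p * p) + 2) + 2)) by (repeat apply Rmult_le_pos; lra).
    lra. }
  set (X := C / dl + C + 2 / dl + 16 * M / eps + 10).
  assert (HX1 : 0 <= C / dl) by (apply Rmult_le_pos; [lra|left; apply Rinv_0_lt_compat; lra]).
  assert (HX2 : 0 <= 2 / dl) by (apply Rmult_le_pos; [lra|left; apply Rinv_0_lt_compat; lra]).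
  assert (HX3 : 0 <= 16 * M / eps) by (apply Rmult_le_pos; [lra|left; apply Rinv_0_lt_compat; lra]).
  destruct (archimed X) as [Hup _].
  set (m0 := up X) in *.
  assert (Hm0R : X < IZR m0) by lra.
  assert (Hm010 : (10 <= m0)%Z) by (apply le_IZR; unfold X in Hm0R; lra).
  exists (Z.to_nat (Z.max (Kmin p) (2 ^ m0))).
  intros n Hn. set (K := Z.of_nat n).
  assert (HK : (Kmin p <= K)%Z /\ (2 ^ m0 <= K)%Z) by (unfold K; lia).
  destruct HK as [HK1 HK2].
  assert (Hmm0 : (m0 <= mK K)%Z).
  { unfold mK. rewrite <- (Z.log2_pow2 m0) by lia. apply Z.log2_le_mono. auto. }
  destruct (asym p a s Hp Hp11 Ha Hs K HK1) as [H2h [Hh1 [HhD [H1D Hz]]]].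
  fold C in Hz.
  set (m := mK K) in *. set (h := hK K) in *. set (D := DD p a s K) in *.
  assert (HmR : IZR m0 <= IZR m) by (apply IZR_le; auto).
  assert (Hm0pos : 10 <= IZR m0) by (apply IZR_le; lia).
  assert (HDpos : (0 < D)%Z) by lia.
  assert (HDR : 0 < IZR D) by (apply IZR_lt; lia).
  assert (E1 : C / IZR m < dl).
  { assert (HCd : C < dl * IZR m0).
    { assert (HH : C / dl < IZR m0) by (unfold X in Hm0R; lra).
      apply (Rmult_lt_compat_r dl) in HH; [|lra]. unfold Rdiv in HH.
      rewrite Rmult_assoc, Rinv_l, Rmult_1_r in HH by lra. lra. }
    apply Rle_lt_trans with (C / IZR m0).
    - unfold Rdiv. apply Rmult_le_compat_l; auto. apply Rinv_le_contravar; lra.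
    - apply (Rmult_lt_reg_r (IZR m0)). lra. unfold Rdiv. rewrite Rmult_assoc, Rinv_l, Rmult_1_r by lra. lra. }
  assert (E2 : C / IZR m <= 1).
  { apply (Rmult_le_reg_r (IZR m)). lra. unfold Rdiv. rewrite Rmult_assoc, Rinv_l by lra.
    unfold X in Hm0R. lra. }
  assert (E3 : 2 / IZR m < dl).
  { apply Rle_lt_trans with (2 / IZR m0).
    - unfold Rdiv. apply Rmult_le_compat_l; [lra|]. apply Rinv_le_contravar; lra.
    - assert (2 / dl < IZR m0) by (unfold X in Hm0R; lra).
      apply (Rmult_lt_reg_r (IZR m0 * / dl)). apply Rmult_lt_0_compat; [lra|apply Rinv_0_lt_compat; lra].
      replace (2 / IZR m0 * (IZR m0 * / dl)) with (2 / dl) by (field; lra).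
      replace (dl * (IZR m0 * / dl)) with (IZR m0) by (field; lra). lra. }
  assert (E4 : 4 * M / IZR m < eps / 4).
  { assert (HH : 16 * M / eps < IZR m0) by (unfold X in Hm0R; lra).
    apply (Rmult_lt_compat_r eps) in HH; [|lra]. unfold Rdiv in HH.
    rewrite Rmult_assoc, Rinv_l, Rmult_1_r in HH by lra.
    assert (HH2 : 16 * M < eps * IZR m) by nra.
    apply (Rmult_lt_reg_r (4 * IZR m)). lra.
    replace (4 * M / IZR m * (4 * IZR m)) with (16 * M) by (field; lra).
    replace (eps / 4 * (4 * IZR m)) with (eps * IZR m) by field. lra. }
  rewrite (mu_int_eq p a s f K Hp Hp11 Ha Hs) by lia. fold D.
  set (nD := Z.to_nat D).
  assert (HnD : INR nD = IZR D) by (unfold nD; rewrite INR_IZR_INZ; f_equal; lia).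
  assert (HnD0 : (0 < nD)%nat) by (unfold nD; lia).
  assert (HR : Rabs (sumR (fun j => f ((IZR j + 1) / INR nD)) nD / INR nD - RInt f 0 1) <= eps / 4).
  { apply riemann; auto. intros x y Hx Hy Hxy. left. apply Hdl; try lra.
    rewrite HnD in Hxy. lra. }
  rewrite HnD in HR.
  assert (HCmp : Rabs (sumR (fun j => f (zpt p a s K (1 + j))) nD / IZR D -
                       sumR (fun j => f ((IZR j + 1) / IZR D)) nD / IZR D) <= eps / 4 + 4 * M / IZR m).
  { unfold Rdiv. rewrite <- Rmult_minus_distr_r, <- sumR_minus.
    rewrite Rabs_mult, (Rabs_right (/ IZR D)) by (apply Rle_ge; left; apply Rinv_0_lt_compat; lra).
    apply Rle_trans with (sumR (fun j => eps / 4 + (if (D - h <=? j)%Z then 2 * M else 0)) nD * / IZR D).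
    - apply Rmult_le_compat_r. left; apply Rinv_0_lt_compat; lra.
      eapply Rle_trans; [apply sumR_abs|]. apply sumR_le. intros j Hj.
      unfold nD in Hj. rewrite Z2Nat.id in Hj by lia.
      destruct (Z.leb_spec (D - h) j).
      + apply Rle_trans with (Rabs (f (zpt p a s K (1 + j))) + Rabs (f ((IZR j + 1) / IZR D))).
        unfold Rminus. eapply Rle_trans; [apply Rabs_triang|]. rewrite Rabs_Ropp. lra.
        pose proof (HM (zpt p a s K (1 + j))). pose proof (HM ((IZR j + 1) / IZR D)). lra.
      + rewrite Rplus_0_r. left.
        pose proof (Hz (1 + j)%Z ltac:(lia) ltac:(lia)) as Hzj.
        rewrite plus_IZR in Hzj. replace (1 + IZR j) with (IZR j + 1) in Hzj by ring.
        assert (Hl01 : 0 <= (IZR j + 1) / IZR D <= 1).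
        { assert (0 <= IZR j) by (apply IZR_le; lia).
          assert (IZR j + 1 <= IZR D) by (rewrite <- plus_IZR; apply IZR_le; lia).
          split. apply Rmult_le_pos; [lra|left; apply Rinv_0_lt_compat; lra].
          apply (Rmult_le_reg_r (IZR D)); auto. unfold Rdiv. rewrite Rmult_assoc, Rinv_l; lra. }
        pose proof (Rle_abs (zpt p a s K (1 + j) - (IZR j + 1) / IZR D)).
        pose proof (Rle_abs (- (zpt p a s K (1 + j) - (IZR j + 1) / IZR D))). rewrite Rabs_Ropp in *.
        apply Hdl; try lra.
    - rewrite sumR_plus, sumR_const, sumR_tail.
      replace (Z.max 0 (Z.of_nat nD - Z.max (D - h) 0)) with h by (unfold nD; lia).
      rewrite HnD. rewrite Rmult_plus_distr_r.
      replace (IZR D * (eps / 4) * / IZR D) with (eps / 4) by (field; lra).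
      apply Rplus_le_compat_l.
      assert (HhR : 0 <= IZR h) by (apply IZR_le; lia).
      apply Rle_trans with (2 * M * (IZR h / IZR D)).
      + right. unfold Rdiv. ring.
      + apply Rle_trans with (2 * M * (2 / IZR m)).
        apply Rmult_le_compat_l; lra. right. unfold Rdiv. ring. }
  set (S1 := sumR (fun j => f (zpt p a s K (1 + j))) nD / IZR D) in *.
  set (S2 := sumR (fun j => f ((IZR j + 1) / IZR D)) nD / IZR D) in *.
  replace (S1 - RInt f 0 1) with ((S1 - S2) + (S2 - RInt f 0 1)) by ring.
  eapply Rle_lt_trans; [apply Rabs_triang|]. lra.
Qed.


Theorem proposition3p21 (p a s : Z) :
  prime p -> (11 <= p)%Z -> (2 <= a <= p - 5)%Z -> (0 <= s <= p - 2)%Z ->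
  forall f : R -> R,
    (forall x, continuous f x) ->
    (exists M, forall x, Rabs (f x) <= M) ->
    is_lim_seq (fun n : nat => mu_int p a s f (Z.of_nat n)) (RInt f 0 1).
Proof.
  exact (main_thm p a s).
Qed.
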